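(* Let $A=I_0+\dots+I_n$ be a sum of C$^*$-ideals, $p\in\{0,\dots,n\}$ and $J\subseteq\{0,\dots,n\}$ with $|J|=p+1$. Then $$B_J/(B_J\cap Q_{p-1})\cong S^{n-p}\Big(\bigcap_{j\in J}I_j\Big)$$ as C$^*$-algebras.
   Context: $\Delta^n=\{x\in[0,1]^{n+1}:\sum_ix_i=1\}$, $\partial\Delta^n$ = points with a zero coordinate, $\Delta^n_j=\{x\in\Delta^n:x_j\le x_i\ \forall i\}$. $B=\{f:\Delta^n\to A\text{ continuous}: f|_{\partial\Delta^n}=0,\ f(\Delta^n_j)\subseteq I_j\ \forall j\}$; $B_J=\{f\in B:f(\Delta^n_{j'})=0\ \forall j'\notin J\}$; $Q_p=\sum_{|L|\le p+1}B_L$ for $p\in\mathbb Z$ (so $Q_{-1}=0$). $S^k$ denotes the $k$-fold C$^*$-suspension, $SA=\{f:[0,1]\to A\text{ continuous}:f(0)=f(1)=0\}$, with $S^0$ the identity. *)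

(* Defs.v *)
From Stdlib Require Import Reals Lra Lia ZArith List.
Open Scope R_scope.

Record Cplx := mkC { Cre : R ; Cim : R }.
Definition C0 : Cplx := mkC 0 0.
Definition C1 : Cplx := mkC 1 0.
Definition Cadd (a b : Cplx) : Cplx := mkC (Cre a + Cre b) (Cim a + Cim b).
Definition Cmul (a b : Cplx) : Cplx :=
  mkC (Cre a * Cre b - Cim a * Cim b) (Cre a * Cim b + Cim a * Cre b).
Definition Cconj (a : Cplx) : Cplx := mkC (Cre a) (- Cim a).
Definition Cabs (a : Cplx) : R := sqrt (Cre a * Cre a + Cim a * Cim a).

Record CStarAlg := {
  car :> Type;
  c0 : car;
  cadd : car -> car -> car;
  copp : car -> car;
  cscal : Cplx -> car -> car;
  cmul : car -> car -> car;
  cstar : car -> car;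
  cnorm : car -> R;
  cadd_assoc : forall x y z, cadd x (cadd y z) = cadd (cadd x y) z;
  cadd_comm : forall x y, cadd x y = cadd y x;
  cadd_0 : forall x, cadd x c0 = x;
  cadd_opp : forall x, cadd x (copp x) = c0;
  cscal_1 : forall x, cscal C1 x = x;
  cscal_mul : forall a b x, cscal (Cmul a b) x = cscal a (cscal b x);
  cscal_addl : forall a b x, cscal (Cadd a b) x = cadd (cscal a x) (cscal b x);
  cscal_addr : forall a x y, cscal a (cadd x y) = cadd (cscal a x) (cscal a y);
  cmul_assoc : forall x y z, cmul x (cmul y z) = cmul (cmul x y) z;
  cmul_addl : forall x y z, cmul (cadd x y) z = cadd (cmul x z) (cmul y z);
  cmul_addr : forall x y z, cmul x (cadd y z) = cadd (cmul x y) (cmul x z);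
  cmul_scall : forall a x y, cmul (cscal a x) y = cscal a (cmul x y);
  cmul_scalr : forall a x y, cmul x (cscal a y) = cscal a (cmul x y);
  cstar_invol : forall x, cstar (cstar x) = x;
  cstar_add : forall x y, cstar (cadd x y) = cadd (cstar x) (cstar y);
  cstar_scal : forall a x, cstar (cscal a x) = cscal (Cconj a) (cstar x);
  cstar_mul : forall x y, cstar (cmul x y) = cmul (cstar y) (cstar x);
  cnorm_nonneg : forall x, 0 <= cnorm x;
  cnorm_eq0 : forall x, cnorm x = 0 -> x = c0;
  cnorm_tri : forall x y, cnorm (cadd x y) <= cnorm x + cnorm y;
  cnorm_scal : forall a x, cnorm (cscal a x) = Cabs a * cnorm x;
  cnorm_mul : forall x y, cnorm (cmul x y) <= cnorm x * cnorm y;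
  cnorm_cstar : forall x, cnorm (cmul (cstar x) x) = cnorm x * cnorm x;
  ccomplete : forall u : nat -> car,
    (forall eps, 0 < eps -> exists N, forall m k, (N <= m)%nat -> (N <= k)%nat ->
        cnorm (cadd (u m) (copp (u k))) < eps) ->
    exists l, forall eps, 0 < eps -> exists N, forall m, (N <= m)%nat ->
        cnorm (cadd (u m) (copp l)) < eps
}.

Arguments c0 {_}. Arguments cadd {_}. Arguments copp {_}. Arguments cscal {_}.
Arguments cmul {_}. Arguments cstar {_}. Arguments cnorm {_}.

Definition cdist {A : CStarAlg} (x y : A) : R := cnorm (cadd x (copp y)).

Definition is_Cideal (A : CStarAlg) (I : A -> Prop) : Prop :=
  I c0 /\
  (forall x y, I x -> I y -> I (cadd x y)) /\
  (forall a x, I x -> I (cscal a x)) /\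
  (forall x y, I y -> I (cmul x y)) /\
  (forall x y, I x -> I (cmul x y)) /\
  (forall (u : nat -> A) l, (forall k, I (u k)) ->
     (forall eps, 0 < eps -> exists N, forall m, (N <= m)%nat -> cdist (u m) l < eps) ->
     I l).

Fixpoint sumA {A : CStarAlg} (g : nat -> A) (n : nat) : A :=
  match n with
  | O => g O
  | S m => cadd (sumA g m) (g (S m))
  end.

Definition is_sum_of_ideals (A : CStarAlg) (I : nat -> A -> Prop) (n : nat) : Prop :=
  forall a : A, exists g : nat -> A, (forall j, (j <= n)%nat -> I j (g j)) /\ a = sumA g n.

Definition in_simplex (n : nat) (x : nat -> R) : Prop :=
  (forall i, (i <= n)%nat -> 0 <= x i <= 1) /\
  (forall i, (n < i)%nat -> x i = 0) /\
  sum_f_R0 x n = 1.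

Definition in_boundary (n : nat) (x : nat -> R) : Prop :=
  in_simplex n x /\ exists i, (i <= n)%nat /\ x i = 0.

Definition in_Delta_j (n j : nat) (x : nat -> R) : Prop :=
  in_simplex n x /\ forall i, (i <= n)%nat -> x j <= x i.

(* Functions Delta^n -> A, encoded as total functions that vanish off Delta^n. *)
Definition SFun (A : CStarAlg) := (nat -> R) -> A.

Definition SF_add {A : CStarAlg} (f g : SFun A) : SFun A := fun x => cadd (f x) (g x).
Definition SF_scal {A : CStarAlg} (a : Cplx) (f : SFun A) : SFun A := fun x => cscal a (f x).
Definition SF_mul {A : CStarAlg} (f g : SFun A) : SFun A := fun x => cmul (f x) (g x).
Definition SF_star {A : CStarAlg} (f : SFun A) : SFun A := fun x => cstar (f x).
Definition SF_zero {A : CStarAlg} : SFun A := fun _ => c0.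

Definition cont_on_simplex {A : CStarAlg} (n : nat) (f : SFun A) : Prop :=
  forall x, in_simplex n x -> forall eps, 0 < eps -> exists delta, 0 < delta /\
    forall y, in_simplex n y -> (forall i, (i <= n)%nat -> Rabs (y i - x i) < delta) ->
      cdist (f y) (f x) < eps.

Definition inB (A : CStarAlg) (I : nat -> A -> Prop) (n : nat) (f : SFun A) : Prop :=
  (forall x, ~ in_simplex n x -> f x = c0) /\
  cont_on_simplex n f /\
  (forall x, in_boundary n x -> f x = c0) /\
  (forall j x, (j <= n)%nat -> in_Delta_j n j x -> I j (f x)).

Definition inB_L (A : CStarAlg) (I : nat -> A -> Prop) (n : nat) (L : list nat)
    (f : SFun A) : Prop :=
  inB A I n f /\
  forall j' x, (j' <= n)%nat -> ~ In j' L -> in_Delta_j n j' x -> f x = c0.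

Definition inQ (A : CStarAlg) (I : nat -> A -> Prop) (n : nat) (p : Z) (f : SFun A) : Prop :=
  exists ls : list (list nat * SFun A),
    Forall (fun Lg => NoDup (fst Lg) /\ (forall j, In j (fst Lg) -> (j <= n)%nat) /\
                      (Z.of_nat (length (fst Lg)) <= p + 1)%Z /\
                      inB_L A I n (fst Lg) (snd Lg)) ls /\
    f = fold_right (fun Lg acc => SF_add (snd Lg) acc) SF_zero ls.

(* S^k D for a C*-subalgebra D of A: elements are nested functions
   [0,1] -> [0,1] -> ... -> A (k levels), each level vanishing off (0,1),
   continuous for the sup norm of the inner level. *)
Fixpoint STy (A : CStarAlg) (k : nat) : Type :=
  match k with O => car A | S k' => R -> STy A k' end.

Fixpoint ST_zero {A : CStarAlg} (k : nat) : STy A k :=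
  match k return STy A k with O => c0 | S k' => fun _ => ST_zero k' end.
Fixpoint ST_add {A : CStarAlg} (k : nat) : STy A k -> STy A k -> STy A k :=
  match k return STy A k -> STy A k -> STy A k with
  | O => fun a b => cadd a b
  | S k' => fun f g t => ST_add k' (f t) (g t) end.
Fixpoint ST_scal {A : CStarAlg} (k : nat) (c : Cplx) : STy A k -> STy A k :=
  match k return STy A k -> STy A k with
  | O => fun a => cscal c a
  | S k' => fun f t => ST_scal k' c (f t) end.
Fixpoint ST_mul {A : CStarAlg} (k : nat) : STy A k -> STy A k -> STy A k :=
  match k return STy A k -> STy A k -> STy A k with
  | O => fun a b => cmul a b
  | S k' => fun f g t => ST_mul k' (f t) (g t) end.
Fixpoint ST_star {A : CStarAlg} (k : nat) : STy A k -> STy A k :=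
  match k return STy A k -> STy A k with
  | O => fun a => cstar a
  | S k' => fun f t => ST_star k' (f t) end.
Fixpoint ST_distle {A : CStarAlg} (k : nat) : STy A k -> STy A k -> R -> Prop :=
  match k return STy A k -> STy A k -> R -> Prop with
  | O => fun a b e => cdist a b <= e
  | S k' => fun f g e => forall t, ST_distle k' (f t) (g t) e end.

Fixpoint inSusp (A : CStarAlg) (D : A -> Prop) (k : nat) : STy A k -> Prop :=
  match k return STy A k -> Prop with
  | O => fun a => D a
  | S k' => fun f =>
      (forall t, 0 <= t <= 1 -> inSusp A D k' (f t)) /\
      (forall t, (t <= 0 \/ 1 <= t) -> f t = ST_zero k') /\
      (forall t, 0 <= t <= 1 -> forall eps, 0 < eps -> exists delta, 0 < delta /\
         forall s, 0 <= s <= 1 -> Rabs (s - t) < delta -> ST_distle k' (f s) (f t) eps)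
  end.

(* B_J / (B_J ∩ Q) ≅ S^k D as C*-algebras: there is a *-homomorphism
   B_J -> S^k D which is onto and whose kernel is exactly B_J ∩ Q
   (first isomorphism theorem; a bijective *-homomorphism of C*-algebras
   is a C*-isomorphism). *)
Definition quotient_iso_susp (A : CStarAlg) (BJ : SFun A -> Prop) (Q : SFun A -> Prop)
    (D : A -> Prop) (k : nat) : Prop :=
  exists phi : SFun A -> STy A k,
    (forall f g, BJ f -> BJ g -> phi (SF_add f g) = ST_add k (phi f) (phi g)) /\
    (forall a f, BJ f -> phi (SF_scal a f) = ST_scal k a (phi f)) /\
    (forall f g, BJ f -> BJ g -> phi (SF_mul f g) = ST_mul k (phi f) (phi g)) /\
    (forall f, BJ f -> phi (SF_star f) = ST_star k (phi f)) /\
    (forall f, BJ f -> inSusp A D k (phi f)) /\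
    (forall h, inSusp A D k h -> exists f, BJ f /\ phi f = h) /\
    (forall f, BJ f -> (phi f = ST_zero k <-> Q f)).

(* Main.v *)
Require Import Defs.
From Stdlib Require Import Reals Lra Lia ZArith List FunctionalExtensionality Classical ClassicalEpsilon.
From Coquelicot Require Compactness.
Open Scope R_scope.


Lemma cadd_0l {A : CStarAlg} (x : A) : cadd c0 x = x.
Proof. rewrite cadd_comm; apply cadd_0. Qed.

Lemma cadd_cancel_r {A : CStarAlg} (x y z : A) : cadd x z = cadd y z -> x = y.
Proof.
  intro H. rewrite <- (cadd_0 A x), <- (cadd_0 A y), <- (cadd_opp A z).
  rewrite !cadd_assoc, H. reflexivity.
Qed.

Lemma cadd_self0 {A : CStarAlg} (x : A) : cadd x x = x -> x = c0.
Proof. intro H. apply (cadd_cancel_r _ _ x). rewrite cadd_0l. exact H. Qed.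

Lemma cadd00 {A : CStarAlg} : cadd (@c0 A) c0 = c0.
Proof. apply cadd_0. Qed.

Lemma cscal_c0 {A : CStarAlg} a : cscal a (@c0 A) = c0.
Proof. apply cadd_self0. rewrite <- cscal_addr, cadd_0. reflexivity. Qed.

Lemma Cadd_real r s : Cadd (mkC r 0) (mkC s 0) = mkC (r + s) 0.
Proof. unfold Cadd; simpl; f_equal; ring. Qed.

Lemma cscal_C0 {A : CStarAlg} (x : A) : cscal (mkC 0 0) x = c0.
Proof. apply cadd_self0. rewrite <- cscal_addl, Cadd_real, Rplus_0_l. reflexivity. Qed.

Lemma cscal_radd {A : CStarAlg} r s (x : A) :
  cscal (mkC (r + s) 0) x = cadd (cscal (mkC r 0) x) (cscal (mkC s 0) x).
Proof. rewrite <- cscal_addl, Cadd_real. reflexivity. Qed.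

Lemma copp_unique {A : CStarAlg} (x y : A) : cadd x y = c0 -> copp x = y.
Proof.
  intro H. apply (cadd_cancel_r _ _ x). rewrite (cadd_comm _ (copp x)), cadd_opp.
  rewrite cadd_comm; symmetry; exact H.
Qed.

Lemma copp_scal {A : CStarAlg} (x : A) : copp x = cscal (mkC (-1) 0) x.
Proof.
  apply copp_unique. transitivity (cadd (cscal (mkC 1 0) x) (cscal (mkC (-1) 0) x)).
  { f_equal. symmetry. apply cscal_1. }
  rewrite <- cscal_radd. replace (1 + -1) with 0 by ring. apply cscal_C0.
Qed.

Lemma copp_c0 {A : CStarAlg} : copp (@c0 A) = c0.
Proof. rewrite copp_scal; apply cscal_c0. Qed.

Lemma Cabs_real r : Cabs (mkC r 0) = Rabs r.
Proof. unfold Cabs; simpl. rewrite Rmult_0_l, Rplus_0_r. apply sqrt_Rsqr_abs. Qed.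

Lemma cnorm_c0 {A : CStarAlg} : cnorm (@c0 A) = 0.
Proof. rewrite <- (cscal_C0 (@c0 A)), cnorm_scal, Cabs_real, Rabs_R0; ring. Qed.

Lemma cnorm_opp {A : CStarAlg} (x : A) : cnorm (copp x) = cnorm x.
Proof. rewrite copp_scal, cnorm_scal, Cabs_real. replace (Rabs (-1)) with 1; [ring|]. rewrite Rabs_left; lra. Qed.

Lemma copp_add {A : CStarAlg} (x y : A) : copp (cadd x y) = cadd (copp x) (copp y).
Proof. rewrite !copp_scal, cscal_addr. reflexivity. Qed.

Lemma copp_copp {A : CStarAlg} (x : A) : copp (copp x) = x.
Proof. apply copp_unique. rewrite cadd_comm. apply cadd_opp. Qed.

Lemma cdist_self {A : CStarAlg} (x : A) : cdist x x = 0.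
Proof. unfold cdist. rewrite cadd_opp. apply cnorm_c0. Qed.

Lemma cdist_sym {A : CStarAlg} (x y : A) : cdist x y = cdist y x.
Proof.
  unfold cdist. rewrite <- cnorm_opp, copp_add, copp_copp, cadd_comm. reflexivity.
Qed.

Lemma cdist_tri {A : CStarAlg} (x y z : A) : cdist x z <= cdist x y + cdist y z.
Proof.
  unfold cdist. eapply Rle_trans; [|apply cnorm_tri].
  right. f_equal. rewrite <- !cadd_assoc. f_equal.
  rewrite cadd_assoc, (cadd_comm _ (copp y)), cadd_opp, cadd_0l. reflexivity.
Qed.

Lemma cdist_c0 {A : CStarAlg} (x : A) : cdist x c0 = cnorm x.
Proof. unfold cdist. rewrite copp_c0, cadd_0. reflexivity. Qed.

Lemma cdist_nonneg {A : CStarAlg} (x y : A) : 0 <= cdist x y.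
Proof. apply cnorm_nonneg. Qed.

Lemma cscal_copp {A : CStarAlg} a (x : A) : cscal a (copp x) = copp (cscal a x).
Proof. symmetry. apply copp_unique. rewrite <- cscal_addr, cadd_opp. apply cscal_c0. Qed.

Lemma cdist_scal {A : CStarAlg} r s (x y : A) :
  cdist (cscal (mkC r 0) x) (cscal (mkC s 0) y) <= Rabs (r - s) * cnorm x + Rabs s * cdist x y.
Proof.
  unfold cdist.
  replace (cadd (cscal (mkC r 0) x) (copp (cscal (mkC s 0) y))) with
    (cadd (cscal (mkC (r - s) 0) x) (cscal (mkC s 0) (cadd x (copp y)))).
  - eapply Rle_trans; [apply cnorm_tri|]. rewrite !cnorm_scal, !Cabs_real. lra.
  - unfold Rminus. rewrite cscal_radd, cscal_addr, cscal_copp.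
    rewrite <- cadd_assoc. f_equal.
    rewrite cadd_assoc. rewrite <- (cadd_0l (copp (cscal (mkC s 0) y))) at 2. f_equal.
    rewrite <- cscal_radd. replace (- s + s) with 0 by ring. apply cscal_C0.
Qed.

Lemma cnorm_scal_real {A : CStarAlg} r (x : A) : cnorm (cscal (mkC r 0) x) = Rabs r * cnorm x.
Proof. rewrite cnorm_scal, Cabs_real. reflexivity. Qed.

Lemma cmul_c0 {A : CStarAlg} : cmul (@c0 A) c0 = c0.
Proof. apply cadd_self0. rewrite <- cmul_addl, cadd_0. reflexivity. Qed.

Lemma cstar_c0 {A : CStarAlg} : cstar (@c0 A) = c0.
Proof. apply cadd_self0. rewrite <- cstar_add, cadd_0. reflexivity. Qed.

Lemma cscal_1r {A : CStarAlg} (x : A) : cscal (mkC 1 0) x = x.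
Proof. apply cscal_1. Qed.


Definition near_vec (N : nat) (d : R) (x x0 : nat -> R) :=
  forall i, (i < N)%nat -> Rabs (x i - x0 i) < d.

Definition VC (N : nat) (P : (nat -> R) -> Prop) (F : (nat -> R) -> R) (x0 : nat -> R) :=
  forall eps, 0 < eps -> exists d, 0 < d /\
    forall x, P x -> near_vec N d x x0 -> Rabs (F x - F x0) < eps.

Lemma near_vec_mono N d d' x x0 : d <= d' -> near_vec N d x x0 -> near_vec N d' x x0.
Proof. intros H H1 i Hi. specialize (H1 i Hi). lra. Qed.

Lemma cont_id x : continuity_pt (fun t => t) x.
Proof. apply derivable_continuous_pt, derivable_pt_id. Qed.

Lemma VC_const N P c x0 : VC N P (fun _ => c) x0.
Proof. intros e He. exists 1. split; [lra|]. intros. rewrite Rminus_diag, Rabs_R0; lra. Qed.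

Lemma VC_proj N P i x0 : (i < N)%nat -> VC N P (fun x => x i) x0.
Proof. intros Hi e He. exists e. split; [lra|]. intros x _ Hx. apply Hx, Hi. Qed.

Lemma VC_ext N P F G x0 : (forall x, F x = G x) -> VC N P F x0 -> VC N P G x0.
Proof. intros H H1 e He. destruct (H1 e He) as [d [Hd H2]]. exists d; split; auto.
  intros. rewrite <- !H. auto. Qed.

Lemma VC_plus N P F G x0 : VC N P F x0 -> VC N P G x0 -> VC N P (fun x => F x + G x) x0.
Proof.
  intros H1 H2 e He. destruct (H1 (e/2)) as [d1 [Hd1 K1]]; [lra|].
  destruct (H2 (e/2)) as [d2 [Hd2 K2]]; [lra|].
  exists (Rmin d1 d2). split; [apply Rmin_pos; auto|]. intros x Px Hx.
  assert (A1 := K1 x Px (near_vec_mono _ _ _ _ _ (Rmin_l _ _) Hx)).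
  assert (A2 := K2 x Px (near_vec_mono _ _ _ _ _ (Rmin_r _ _) Hx)).
  replace (F x + G x - (F x0 + G x0)) with ((F x - F x0) + (G x - G x0)) by ring.
  eapply Rle_lt_trans; [apply Rabs_triang|]. lra.
Qed.

Lemma VC_comp N P F g x0 : VC N P F x0 -> continuity_pt g (F x0) -> VC N P (fun x => g (F x)) x0.
Proof.
  intros H1 H2 e He. destruct (H2 e He) as [a [Ha K]].
  destruct (H1 a Ha) as [d [Hd K2]]. exists d; split; auto. intros x Px Hx.
  destruct (Req_dec (F x) (F x0)) as [E|E].
  - rewrite E, Rminus_diag, Rabs_R0; lra.
  - apply (K (F x)). split. { split; [exact I| auto]. } apply K2; auto.
Qed.

Lemma VC_opp N P F x0 : VC N P F x0 -> VC N P (fun x => - F x) x0.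
Proof. intro H. apply (VC_comp _ _ _ (fun t => - t)); auto. exact (continuity_pt_opp (fun t => t) _ (cont_id _)). Qed.

Lemma VC_minus N P F G x0 : VC N P F x0 -> VC N P G x0 -> VC N P (fun x => F x - G x) x0.
Proof. intros. apply VC_plus; auto. apply VC_opp; auto. Qed.

Lemma VC_sq N P F x0 : VC N P F x0 -> VC N P (fun x => F x * F x) x0.
Proof. intro H. apply (VC_comp _ _ _ (fun t => t * t)); auto.
  exact (continuity_pt_mult (fun t => t) (fun t => t) _ (cont_id _) (cont_id _)). Qed.

Lemma VC_scale N P F c x0 : VC N P F x0 -> VC N P (fun x => c * F x) x0.
Proof. intro H. apply (VC_comp _ _ _ (fun t => c * t)); auto.
  refine (continuity_pt_mult (fun _ => c) (fun t => t) _ _ (cont_id _)).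
  apply continuity_pt_const; intros ? ?; reflexivity. Qed.

Lemma VC_mult N P F G x0 : VC N P F x0 -> VC N P G x0 -> VC N P (fun x => F x * G x) x0.
Proof.
  intros H1 H2.
  apply (VC_ext _ _ (fun x => /4 * ((F x + G x) * (F x + G x)) + - (/4 * ((F x - G x) * (F x - G x))))).
  { intro x. field. }
  apply VC_plus; [apply VC_scale, VC_sq, VC_plus; auto|apply VC_opp, VC_scale, VC_sq, VC_minus; auto].
Qed.

Lemma VC_abs N P F x0 : VC N P F x0 -> VC N P (fun x => Rabs (F x)) x0.
Proof. intro H. apply (VC_comp _ _ _ Rabs); auto. apply Rcontinuity_abs. Qed.

Lemma VC_max N P F G x0 : VC N P F x0 -> VC N P G x0 -> VC N P (fun x => Rmax (F x) (G x)) x0.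
Proof.
  intros H1 H2. apply (VC_ext _ _ (fun x => /2 * (F x + G x) + /2 * Rabs (F x - G x))).
  { intro x. unfold Rmax. destruct (Rle_dec (F x) (G x)).
    - rewrite Rabs_left1 by lra. field.
    - rewrite Rabs_right by lra. field. }
  apply VC_plus; apply VC_scale; [apply VC_plus|apply VC_abs, VC_minus]; auto.
Qed.

Lemma VC_min N P F G x0 : VC N P F x0 -> VC N P G x0 -> VC N P (fun x => Rmin (F x) (G x)) x0.
Proof.
  intros H1 H2. apply (VC_ext _ _ (fun x => /2 * (F x + G x) + - (/2 * Rabs (F x - G x)))).
  { intro x. unfold Rmin. destruct (Rle_dec (F x) (G x)).
    - rewrite Rabs_left1 by lra. field.
    - rewrite Rabs_right by lra. field. }
  apply VC_plus; [apply VC_scale, VC_plus|apply VC_opp, VC_scale, VC_abs, VC_minus]; auto.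
Qed.

Lemma VC_inv N P F x0 : VC N P F x0 -> F x0 <> 0 -> VC N P (fun x => / F x) x0.
Proof. intros H Hn. apply (VC_comp _ _ _ (fun t => / t)); auto.
  exact (continuity_pt_inv (fun t => t) _ (cont_id _) Hn). Qed.

Lemma VC_div N P F G x0 : VC N P F x0 -> VC N P G x0 -> G x0 <> 0 -> VC N P (fun x => F x / G x) x0.
Proof. intros. unfold Rdiv. apply VC_mult; auto. apply VC_inv; auto. Qed.

Fixpoint rsum (k : nat) (g : nat -> R) : R :=
  match k with O => 0 | S k' => rsum k' g + g k' end.
Fixpoint rmax (k : nat) (g : nat -> R) : R :=
  match k with O => 0 | S k' => Rmax (rmax k' g) (g k') end.
Fixpoint rmin (n : nat) (x : nat -> R) : R :=
  match n with O => x O | S n' => Rmin (rmin n' x) (x (S n')) end.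

Lemma VC_rsum N P k G x0 : (forall l, (l < k)%nat -> VC N P (G l) x0) ->
  VC N P (fun x => rsum k (fun l => G l x)) x0.
Proof.
  induction k; intro H; simpl.
  - apply VC_const.
  - apply VC_plus; [apply IHk; intros; apply H; lia| apply H; lia].
Qed.

Lemma VC_rmax N P k G x0 : (forall l, (l < k)%nat -> VC N P (G l) x0) ->
  VC N P (fun x => rmax k (fun l => G l x)) x0.
Proof.
  induction k; intro H; simpl.
  - apply VC_const.
  - apply VC_max; [apply IHk; intros; apply H; lia| apply H; lia].
Qed.

Lemma VC_rmin N P n G x0 : (forall i, (i <= n)%nat -> VC N P (G i) x0) ->
  VC N P (fun x => rmin n (fun i => G i x)) x0.
Proof.
  induction n; intro H; simpl.
  - apply H; lia.
  - apply VC_min; [apply IHn; intros; apply H; lia| apply H; lia].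
Qed.

Fixpoint lsum (J : list nat) (g : nat -> R) : R :=
  match J with nil => 0 | j :: J' => g j + lsum J' g end.

Lemma VC_lsum N P J G x0 : (forall j, In j J -> VC N P (G j) x0) ->
  VC N P (fun x => lsum J (fun j => G j x)) x0.
Proof.
  induction J; intro H; simpl.
  - apply VC_const.
  - apply VC_plus; [apply H; left; auto| apply IHJ; intros; apply H; right; auto].
Qed.

Lemma VC_all N P M (G : nat -> (nat -> R) -> R) x0 :
  (forall l, (l < M)%nat -> VC N P (G l) x0) ->
  forall eps, 0 < eps -> exists d, 0 < d /\ forall x, P x -> near_vec N d x x0 ->
    forall l, (l < M)%nat -> Rabs (G l x - G l x0) < eps.
Proof.
  induction M; intros H e He.
  - exists 1. split; [lra|]. intros. lia.
  - destruct (IHM (fun l Hl => H l ltac:(lia)) e He) as [d1 [Hd1 K1]].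
    destruct (H M ltac:(lia) e He) as [d2 [Hd2 K2]].
    exists (Rmin d1 d2). split; [apply Rmin_pos; auto|]. intros x Px Hx l Hl.
    destruct (Nat.eq_dec l M) as [->|Hne].
    + apply K2; auto. eapply near_vec_mono; [apply Rmin_r|]; eauto.
    + apply K1; auto; [|lia]. eapply near_vec_mono; [apply Rmin_l|]; eauto.
Qed.


Lemma rmin_le n x i : (i <= n)%nat -> rmin n x <= x i.
Proof.
  induction n; simpl; intro H.
  - replace i with 0%nat by lia; lra.
  - destruct (Nat.eq_dec i (S n)) as [->|Hne]; [apply Rmin_r|].
    eapply Rle_trans; [apply Rmin_l|]. apply IHn; lia.
Qed.

Lemma rmin_ex n x : exists i, (i <= n)%nat /\ rmin n x = x i.
Proof.
  induction n; simpl.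
  - exists 0%nat; split; auto.
  - destruct IHn as [i [Hi E]]. unfold Rmin. destruct (Rle_dec (rmin n x) (x (S n))).
    + exists i; split; auto.
    + exists (S n); split; auto.
Qed.

Lemma rmin_ge n x c : (forall i, (i <= n)%nat -> c <= x i) -> c <= rmin n x.
Proof. intro H. destruct (rmin_ex n x) as [i [Hi ->]]. auto. Qed.

Lemma rmax_ge0 k g : 0 <= rmax k g.
Proof. induction k; simpl; [lra|]. eapply Rle_trans; [apply IHk|apply Rmax_l]. Qed.

Lemma rmax_ge k g l : (l < k)%nat -> g l <= rmax k g.
Proof.
  induction k; simpl; intro H; [lia|].
  destruct (Nat.eq_dec l k) as [->|Hne]; [apply Rmax_r|].
  eapply Rle_trans; [apply IHk; lia|apply Rmax_l].
Qed.

Lemma rmax_le k g c : 0 <= c -> (forall l, (l < k)%nat -> g l <= c) -> rmax k g <= c.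
Proof.
  induction k; simpl; intros H0 H; auto.
  apply Rmax_lub; [apply IHk; auto|apply H; lia].
Qed.

Lemma rmax_lt k g c : 0 < c -> (forall l, (l < k)%nat -> g l < c) -> rmax k g < c.
Proof.
  induction k; simpl; intros H0 H; auto.
  apply Rmax_lub_lt; [apply IHk; auto|apply H; lia].
Qed.

Lemma rmax_ex k g : 0 < rmax k g -> exists l, (l < k)%nat /\ rmax k g = g l.
Proof.
  induction k; simpl; intro H; [lra|].
  unfold Rmax in *. destruct (Rle_dec (rmax k g) (g k)).
  - exists k; split; auto.
  - destruct (IHk H) as [l [Hl E]]. exists l; split; auto.
Qed.

Lemma rmax_ext k g h : (forall l, (l < k)%nat -> g l = h l) -> rmax k g = rmax k h.
Proof. induction k; simpl; intro H; auto. f_equal; [apply IHk; intros; apply H; lia|apply H; lia]. Qed.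

Lemma rsum_ext k g h : (forall l, (l < k)%nat -> g l = h l) -> rsum k g = rsum k h.
Proof. induction k; simpl; intro H; auto. f_equal; [apply IHk; intros; apply H; lia|apply H; lia]. Qed.

Lemma rmax_scale k g c : 0 <= c -> rmax k (fun l => c * g l) = c * rmax k g.
Proof.
  intro Hc. induction k; simpl; [ring|]. rewrite IHk.
  unfold Rmax. destruct (Rle_dec (rmax k g) (g k)), (Rle_dec (c * rmax k g) (c * g k)); auto.
  - destruct (Req_dec c 0) as [->|]; [ring|]. exfalso. apply n. apply Rmult_le_compat_l; lra.
  - destruct (Req_dec c 0) as [->|]; [ring|]. exfalso. apply n.
    apply Rmult_le_reg_l with c; lra.
Qed.

Lemma rsum_scale k g c : rsum k (fun l => c * g l) = c * rsum k g.
Proof. induction k; simpl; [ring|]. rewrite IHk; ring. Qed.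

Lemma rsum_plus k g h : rsum k (fun l => g l + h l) = rsum k g + rsum k h.
Proof. induction k; simpl; [ring|]. rewrite IHk; ring. Qed.

Lemma rsum_const k c : rsum k (fun _ => c) = INR k * c.
Proof. induction k; [simpl; ring|]. rewrite S_INR. simpl rsum. rewrite IHk; ring. Qed.

Lemma rsum_nonneg k g : (forall l, (l < k)%nat -> 0 <= g l) -> 0 <= rsum k g.
Proof. induction k; simpl; intro H; [lra|]. assert (0 <= g k) by (apply H; lia).
  assert (0 <= rsum k g) by (apply IHk; intros; apply H; lia). lra. Qed.

Lemma rsum_ge k g l : (forall l, (l < k)%nat -> 0 <= g l) -> (l < k)%nat -> g l <= rsum k g.
Proof.
  induction k; simpl; intros H Hl; [lia|].
  destruct (Nat.eq_dec l k) as [->|Hne].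
  - assert (0 <= rsum k g) by (apply rsum_nonneg; intros; apply H; lia). lra.
  - assert (0 <= g k) by (apply H; lia). assert (g l <= rsum k g) by (apply IHk; [intros; apply H|]; lia). lra.
Qed.

Lemma rsum_zero k g : (forall l, (l < k)%nat -> 0 <= g l) -> rsum k g = 0 -> forall l, (l < k)%nat -> g l = 0.
Proof.
  intros H E l Hl. assert (0 <= g l) by auto. assert (g l <= rsum k g) by (apply rsum_ge; auto). lra.
Qed.

Lemma rmax_le_rsum k g : (forall l, (l < k)%nat -> 0 <= g l) -> rmax k g <= rsum k g.
Proof. intro H. apply rmax_le; [apply rsum_nonneg; auto|]. intros; apply rsum_ge; auto. Qed.

Lemma rsum_ind k l0 c : (l0 < k)%nat -> rsum k (fun l => if Nat.eq_dec l l0 then c else 0) = c.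
Proof.
  induction k; simpl; intro H; [lia|].
  destruct (Nat.eq_dec k l0) as [->|Hne].
  - replace (rsum l0 _) with 0; [ring|].
    clear. assert (forall m, (m <= l0)%nat -> rsum m (fun l => if Nat.eq_dec l l0 then c else 0) = 0).
    { induction m; simpl; intros; auto. rewrite IHm by lia. destruct (Nat.eq_dec m l0); [lia|ring]. }
    symmetry; apply H; lia.
  - rewrite IHk by lia. ring.
Qed.

Lemma sumf_ind n i0 c : (i0 <= n)%nat -> sum_f_R0 (fun i => if Nat.eq_dec i0 i then c else 0) n = c.
Proof.
  induction n; cbn [sum_f_R0]; intro H.
  - replace i0 with 0%nat by lia. destruct (Nat.eq_dec 0 0); [auto|lia].
  - destruct (Nat.eq_dec i0 (S n)) as [->|Hne].
    + replace (sum_f_R0 _ n) with 0; [ring|].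
      clear. assert (forall m, (m <= n)%nat -> sum_f_R0 (fun i => if Nat.eq_dec (S n) i then c else 0) m = 0).
      { induction m; cbn [sum_f_R0]; intros. destruct (Nat.eq_dec (S n) 0); [lia|auto].
        rewrite IHm by lia. destruct (Nat.eq_dec (S n) (S m)); [lia|ring]. }
      symmetry; apply H; lia.
    + rewrite IHn by lia. ring.
Qed.

Lemma sumf_rsum n k (G : nat -> nat -> R) :
  sum_f_R0 (fun i => rsum k (fun l => G l i)) n = rsum k (fun l => sum_f_R0 (G l) n).
Proof.
  induction k; simpl.
  - induction n; simpl; auto. rewrite IHn; ring.
  - rewrite sum_plus, IHk. reflexivity.
Qed.

Lemma sumf_ext n g h : (forall i, (i <= n)%nat -> g i = h i) -> sum_f_R0 g n = sum_f_R0 h n.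
Proof. induction n; simpl; intro H; [apply H; lia|]. f_equal; [apply IHn; intros; apply H; lia|apply H; lia]. Qed.

Lemma lsum_nonneg J g : (forall j, In j J -> 0 <= g j) -> 0 <= lsum J g.
Proof. induction J; simpl; intro H; [lra|]. assert (0 <= g a) by auto. assert (0 <= lsum J g) by auto. lra. Qed.

Lemma lsum_ge J g j : (forall j, In j J -> 0 <= g j) -> In j J -> g j <= lsum J g.
Proof.
  induction J; simpl; intros H Hj; [contradiction|].
  destruct Hj as [->|Hj].
  - assert (0 <= lsum J g) by (apply lsum_nonneg; auto). lra.
  - assert (0 <= g a) by auto. assert (g j <= lsum J g) by auto. lra.
Qed.

Lemma lsum_div J g c : lsum J (fun j => g j / c) = lsum J g / c.
Proof. induction J; simpl; [unfold Rdiv; ring|]. rewrite IHJ; unfold Rdiv; ring. Qed.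

Lemma lsum_ext J g h : (forall j, In j J -> g j = h j) -> lsum J g = lsum J h.
Proof. induction J; simpl; intro H; auto. rewrite H, IHJ; auto. Qed.


Definition Eprops (n : nat) (J : list nat) (k : nat) (e : nat -> nat) :=
  (forall l, (l < k)%nat -> (e l <= n)%nat /\ ~ In (e l) J) /\
  (forall l l', (l < k)%nat -> (l' < k)%nat -> e l = e l' -> l = l') /\
  (forall i, (i <= n)%nat -> ~ In i J -> exists l, (l < k)%nat /\ e l = i).

Definition Xraw (n k : nat) (e : nat -> nat) (c : R) (y : nat -> R) (i : nat) : R :=
  if le_dec i n then c + rsum k (fun l => if Nat.eq_dec (e l) i then y l else 0) else 0.

Lemma sumf_nonneg n g : (forall i, (i <= n)%nat -> 0 <= g i) -> 0 <= sum_f_R0 g n.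
Proof.
  induction n; cbn [sum_f_R0]; intro H; [apply H; lia|].
  assert (0 <= g (S n)) by (apply H; lia). assert (0 <= sum_f_R0 g n) by (apply IHn; intros; apply H; lia). lra.
Qed.

Lemma sumf_ge n g i : (forall i, (i <= n)%nat -> 0 <= g i) -> (i <= n)%nat -> g i <= sum_f_R0 g n.
Proof.
  induction n; cbn [sum_f_R0]; intros H Hi.
  - replace i with 0%nat by lia; lra.
  - assert (0 <= sum_f_R0 g n).
    { apply sumf_nonneg. intros; apply H; lia. }
    destruct (Nat.eq_dec i (S n)) as [->|]; [lra|].
    assert (0 <= g (S n)) by (apply H; lia). assert (g i <= sum_f_R0 g n) by (apply IHn; [intros; apply H|]; lia). lra.
Qed.

Lemma Xraw_sum n J k e c y : Eprops n J k e ->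
  sum_f_R0 (Xraw n k e c y) n = INR (S n) * c + rsum k y.
Proof.
  intros [E1 [E2 E3]].
  rewrite (sumf_ext _ _ (fun i => c + rsum k (fun l => if Nat.eq_dec (e l) i then y l else 0))).
  2:{ intros i Hi. unfold Xraw. destruct (le_dec i n); [auto|lia]. }
  rewrite sum_plus, sum_cte, sumf_rsum.
  rewrite (rsum_ext _ _ y). { ring. }
  intros l Hl. apply sumf_ind. apply E1; auto.
Qed.

Lemma Xraw_e n J k e c y l : Eprops n J k e -> (l < k)%nat -> Xraw n k e c y (e l) = c + y l.
Proof.
  intros [E1 [E2 E3]] Hl. unfold Xraw. destruct (le_dec (e l) n); [|destruct (E1 l Hl); lia].
  f_equal. rewrite (rsum_ext _ _ (fun l' => if Nat.eq_dec l' l then y l else 0)).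
  - apply rsum_ind; auto.
  - intros l' Hl'. destruct (Nat.eq_dec (e l') (e l)) as [Ee|Ee], (Nat.eq_dec l' l) as [El|El]; subst; auto.
    + exfalso; apply El; apply E2; auto.
    + exfalso; apply Ee; auto.
Qed.

Lemma rsum_zero_fn k : rsum k (fun _ => 0) = 0.
Proof. rewrite rsum_const; ring. Qed.

Lemma Xraw_J n J k e c y j : Eprops n J k e -> In j J -> (j <= n)%nat -> Xraw n k e c y j = c.
Proof.
  intros [E1 [E2 E3]] Hj Hjn. unfold Xraw. destruct (le_dec j n) as [Hle|]; [|lia].
  rewrite (rsum_ext _ _ (fun _ => 0)). { rewrite rsum_zero_fn; ring. }
  intros l Hl. destruct (Nat.eq_dec (e l) j); auto. subst. exfalso; apply (E1 l Hl); auto.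
Qed.

Lemma Xraw_out n k e c y i : (n < i)%nat -> Xraw n k e c y i = 0.
Proof. intro H. unfold Xraw. destruct (le_dec i n); [lia|auto]. Qed.

Lemma Xraw_ge n J k e c y i : Eprops n J k e -> (forall l, (l < k)%nat -> 0 <= y l) -> (i <= n)%nat ->
  c <= Xraw n k e c y i.
Proof.
  intros _ H Hi. unfold Xraw. destruct (le_dec i n) as [Hle|]; [|lia].
  assert (0 <= rsum k (fun l => if Nat.eq_dec (e l) i then y l else 0)); [|lra].
  apply rsum_nonneg. intros l Hl. destruct (Nat.eq_dec (e l) i); auto; lra.
Qed.

Lemma Xraw_ext n k e c y y' : (forall l, (l < k)%nat -> y l = y' l) -> Xraw n k e c y = Xraw n k e c y'.
Proof.
  intro H. apply functional_extensionality; intro i. unfold Xraw. destruct (le_dec i n) as [Hle|]; auto.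
  f_equal. apply rsum_ext. intros l Hl. rewrite H; auto.
Qed.

Definition cube (k : nat) (v : nat -> R) := forall l, (l < k)%nat -> 0 <= v l <= 1.

Definition yv (k : nat) (v : nat -> R) (l : nat) := v l * rmax k v / rsum k v.

Definition Xm (n k : nat) (e : nat -> nat) (v : nat -> R) : nat -> R :=
  Xraw n k e ((1 - rmax k v) / INR (S n)) (yv k v).

Definition Psi (n k : nat) (e : nat -> nat) (x : nat -> R) (l : nat) : R :=
  (x (e l) - rmin n x) * rsum k (fun l => x (e l) - rmin n x) / rmax k (fun l => x (e l) - rmin n x).

Lemma INR_Sn_pos n : 0 < INR (S n).
Proof. apply lt_0_INR; lia. Qed.

Lemma cube_M_le1 k v : cube k v -> rmax k v <= 1.
Proof. intro H. apply rmax_le; [lra|]. intros l Hl; apply H; auto. Qed.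

Lemma cube_S_zero k v : cube k v -> rsum k v = 0 -> forall l, (l < k)%nat -> v l = 0.
Proof. intros H E. apply rsum_zero; auto. intros l Hl; apply H; auto. Qed.

Lemma yv_nonneg k v l : cube k v -> (l < k)%nat -> 0 <= yv k v l.
Proof.
  intros H Hl. unfold yv. destruct (H l Hl).
  assert (0 <= rmax k v) by apply rmax_ge0. assert (0 <= rsum k v) by (apply rsum_nonneg; intros; apply H; auto).
  destruct (Req_dec (rsum k v) 0) as [E|E].
  - unfold Rdiv; rewrite E, Rinv_0; lra.
  - unfold Rdiv. apply Rmult_le_pos; [apply Rmult_le_pos; auto|]. apply Rlt_le, Rinv_0_lt_compat; lra.
Qed.

Lemma yv_sum k v : cube k v -> rsum k (yv k v) = rmax k v.
Proof.
  intro H. destruct (Req_dec (rsum k v) 0) as [E|E].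
  - assert (Z := cube_S_zero k v H E).
    rewrite (rsum_ext _ _ (fun _ => 0)). 2:{ intros l Hl. unfold yv. rewrite Z; auto. unfold Rdiv; ring. }
    rewrite rsum_zero_fn. rewrite (rmax_ext _ _ (fun _ => 0)) by auto.
    symmetry. apply Rle_antisym; [apply rmax_le; intros; lra|apply rmax_ge0].
  - unfold yv. rewrite (rsum_ext _ _ (fun l => (rmax k v / rsum k v) * v l)).
    2:{ intros; unfold Rdiv; ring. }
    rewrite rsum_scale. field. auto.
Qed.

Lemma X_simplex n J k e v : Eprops n J k e -> cube k v -> in_simplex n (Xm n k e v).
Proof.
  intros HE Hv. assert (HM := cube_M_le1 k v Hv). assert (Hn := INR_Sn_pos n).
  assert (Hm : 0 <= (1 - rmax k v) / INR (S n)).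
  { unfold Rdiv. apply Rmult_le_pos; [lra|]. apply Rlt_le, Rinv_0_lt_compat; auto. }
  assert (Hs : sum_f_R0 (Xm n k e v) n = 1).
  { unfold Xm. rewrite (Xraw_sum n J) by auto. rewrite yv_sum by auto. field. lra. }
  assert (Hnn : forall i, (i <= n)%nat -> 0 <= Xm n k e v i).
  { intros i Hi. eapply Rle_trans; [apply Hm|]. unfold Xm. apply (Xraw_ge n J); auto.
    intros; apply yv_nonneg; auto. }
  split; [|split].
  - intros i Hi. split; auto. rewrite <- Hs. apply sumf_ge; auto.
  - intros i Hi. apply Xraw_out; auto.
  - auto.
Qed.

Lemma X_rmin n J k e v j0 : Eprops n J k e -> cube k v -> In j0 J -> (j0 <= n)%nat ->
  rmin n (Xm n k e v) = (1 - rmax k v) / INR (S n).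
Proof.
  intros HE Hv Hj0 Hj0n. apply Rle_antisym.
  - eapply Rle_trans; [apply (rmin_le n _ j0 Hj0n)|]. unfold Xm. rewrite (Xraw_J n J) by auto. lra.
  - apply rmin_ge. intros i Hi. unfold Xm. apply (Xraw_ge n J); auto. intros; apply yv_nonneg; auto.
Qed.


Lemma X_DeltaJ n J k e v j : Eprops n J k e -> cube k v -> In j J -> (j <= n)%nat ->
  in_Delta_j n j (Xm n k e v).
Proof.
  intros HE Hv Hj Hjn. split; [apply (X_simplex n J); auto|].
  intros i Hi. unfold Xm. rewrite (Xraw_J n J) by auto. apply (Xraw_ge n J); auto.
  intros; apply yv_nonneg; auto.
Qed.

Definition bad (n : nat) (J : list nat) (x : nat -> R) :=
  in_boundary n x \/ exists i, (i <= n)%nat /\ ~ In i J /\ in_Delta_j n i x.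

Lemma X_bad n J k e v l j0 : Eprops n J k e -> cube k v -> (l < k)%nat -> (v l = 0 \/ v l = 1) ->
  In j0 J -> (j0 <= n)%nat -> bad n J (Xm n k e v).
Proof.
  intros HE Hv Hl Hvl Hj0 Hj0n. assert (HS := X_simplex n J k e v HE Hv).
  destruct Hvl as [E|E].
  - right. exists (e l). destruct HE as [E1 E2]. destruct (E1 l Hl) as [Hel HelJ].
    split; auto. split; auto. split; auto. intros i Hi.
    unfold Xm. rewrite (Xraw_e n J) by (auto; split; auto).
    unfold yv. rewrite E. unfold Rdiv. rewrite !Rmult_0_l, Rplus_0_r.
    apply (Xraw_ge n J); auto; [split; auto|]. intros; apply yv_nonneg; auto.
  - left. split; auto. exists j0. split; auto. unfold Xm. rewrite (Xraw_J n J) by auto.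
    assert (rmax k v = 1).
    { apply Rle_antisym; [apply cube_M_le1; auto|]. rewrite <- E. apply rmax_ge; auto. }
    rewrite H. unfold Rdiv; ring.
Qed.

Lemma Psi_X n J k e v j0 l : Eprops n J k e -> cube k v -> In j0 J -> (j0 <= n)%nat -> (l < k)%nat ->
  Psi n k e (Xm n k e v) l = v l.
Proof.
  intros HE Hv Hj0 Hj0n Hl. unfold Psi. rewrite (X_rmin n J k e v j0) by auto.
  assert (Hy : forall l, (l < k)%nat -> Xm n k e v (e l) - (1 - rmax k v) / INR (S n) = yv k v l).
  { intros l' Hl'. unfold Xm. rewrite (Xraw_e n J) by auto. ring. }
  rewrite Hy by auto. rewrite (rsum_ext _ _ (yv k v)) by auto. rewrite (rmax_ext _ _ (yv k v)) by auto.
  rewrite yv_sum by auto.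
  destruct (Req_dec (rsum k v) 0) as [E|E].
  - assert (Z := cube_S_zero k v Hv E). unfold yv. rewrite Z by auto. unfold Rdiv; ring.
  - assert (HM : rmax k v <> 0).
    { intro HM. apply E. rewrite (rsum_ext _ _ (fun _ => 0)); [apply rsum_zero_fn|].
      intros l' Hl'. assert (v l' <= rmax k v) by (apply rmax_ge; auto). destruct (Hv l' Hl'). lra. }
    rewrite (rmax_ext k (yv k v) (fun l => (rmax k v / rsum k v) * v l)).
    2:{ intros; unfold yv, Rdiv; ring. }
    rewrite rmax_scale.
    2:{ unfold Rdiv. apply Rmult_le_pos; [apply rmax_ge0|]. 
        assert (0 <= rsum k v) by (apply rsum_nonneg; intros; apply Hv; auto).
        apply Rlt_le, Rinv_0_lt_compat; lra. }
    unfold yv. field. auto.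
Qed.

Definition inFJ (n : nat) (J : list nat) (x : nat -> R) :=
  in_simplex n x /\ forall j, In j J -> forall i, (i <= n)%nat -> x j <= x i.

Lemma Xraw_eq n k e c1 c2 y1 y2 : c1 = c2 -> (forall l, (l < k)%nat -> y1 l = y2 l) ->
  Xraw n k e c1 y1 = Xraw n k e c2 y2.
Proof. intros -> H. apply Xraw_ext; auto. Qed.

Lemma X_Psi n J k e x : Eprops n J k e -> (forall j, In j J -> (j <= n)%nat) -> inFJ n J x ->
  cube k (Psi n k e x) /\ Xm n k e (Psi n k e x) = x.
Proof.
  intros HE HJn [Hx HFJ]. assert (HE' := HE). destruct HE' as [E1 [E2 E3]].
  destruct Hx as [Hx1 [Hx2 Hx3]].
  set (mn := rmin n x).
  assert (Hmn0 : 0 <= mn) by (apply rmin_ge; intros; apply Hx1; auto).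
  assert (xj : forall j, In j J -> x j = mn).
  { intros j Hj. apply Rle_antisym; [|apply rmin_le; auto].
    destruct (rmin_ex n x) as [i [Hi Ei]]. unfold mn; rewrite Ei. apply HFJ; auto. }
  set (y := fun l => x (e l) - mn).
  assert (Hy0 : forall l, (l < k)%nat -> 0 <= y l).
  { intros l Hl. unfold y, mn. assert (rmin n x <= x (e l)) by (apply rmin_le; apply E1; auto). lra. }
  assert (Hrep : x = Xraw n k e mn y).
  { apply functional_extensionality; intro i. destruct (le_dec i n) as [Hi|Hi].
    - destruct (in_dec Nat.eq_dec i J) as [HiJ|HiJ].
      + rewrite (Xraw_J n J) by auto. auto.
      + destruct (E3 i Hi HiJ) as [l [Hl <-]]. rewrite (Xraw_e n J) by auto. unfold y; ring.
    - rewrite Xraw_out by lia. apply Hx2; lia. }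
  assert (Hsum : 1 = INR (S n) * mn + rsum k y).
  { rewrite <- Hx3, Hrep at 1. apply (Xraw_sum n J); auto. }
  assert (HPsi : forall l, Psi n k e x l = y l * rsum k y / rmax k y) by reflexivity.
  assert (Hn := INR_Sn_pos n).
  set (W := rsum k y) in *. set (Y := rmax k y) in *.
  assert (HY0 : 0 <= Y) by apply rmax_ge0.
  assert (HyY : forall l, (l < k)%nat -> y l <= Y) by (intros; apply rmax_ge; auto).
  assert (HYW : Y <= W) by (apply rmax_le_rsum; auto).
  destruct (Req_dec Y 0) as [EY|EY].
  - assert (Hy00 : forall l, (l < k)%nat -> y l = 0) by (intros l Hl; specialize (HyY l Hl); specialize (Hy0 l Hl); lra).
    assert (HP0 : forall l, (l < k)%nat -> Psi n k e x l = 0).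
    { intros l Hl. rewrite HPsi, Hy00 by auto. unfold Rdiv; ring. }
    split. { intros l Hl. rewrite HP0 by auto. lra. }
    assert (HW0 : W = 0) by (unfold W; rewrite (rsum_ext _ _ (fun _ => 0)) by auto; apply rsum_zero_fn).
    transitivity (Xraw n k e mn y); [|symmetry; exact Hrep].
    unfold Xm. apply Xraw_eq.
    + rewrite (rmax_ext _ _ (fun _ => 0)) by auto.
      replace (rmax k (fun _ => 0)) with 0.
      2:{ apply Rle_antisym; [apply rmax_ge0|apply rmax_le; intros; lra]. }
      apply Rmult_eq_reg_l with (INR (S n)); [|lra]. rewrite HW0 in Hsum. field_simplify; lra.
    + intros l Hl. unfold yv. rewrite HP0, Hy00 by auto. unfold Rdiv; ring.
  - assert (HYp : 0 < Y) by lra.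
    assert (HP : forall l, (l < k)%nat -> Psi n k e x l = (W / Y) * y l).
    { intros l Hl. rewrite HPsi. unfold Rdiv; ring. }
    assert (HWY : 0 <= W / Y) by (unfold Rdiv; apply Rmult_le_pos; [lra|apply Rlt_le, Rinv_0_lt_compat; lra]).
    assert (HMP : rmax k (Psi n k e x) = W).
    { rewrite (rmax_ext _ _ (fun l => (W / Y) * y l)) by auto. rewrite rmax_scale by auto.
      fold Y. field. auto. }
    assert (HSP : rsum k (Psi n k e x) = (W / Y) * W).
    { rewrite (rsum_ext _ _ (fun l => (W / Y) * y l)) by auto. rewrite rsum_scale. reflexivity. }
    split.
    { intros l Hl. rewrite HP by auto. split.
      - apply Rmult_le_pos; auto.
      - assert (W / Y * y l <= W / Y * Y) by (apply Rmult_le_compat_l; auto).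
        replace (W / Y * Y) with W in H by (field; auto). assert (0 <= INR (S n) * mn) by (apply Rmult_le_pos; lra). lra. }
    transitivity (Xraw n k e mn y); [|symmetry; exact Hrep].
    unfold Xm. apply Xraw_eq.
    + rewrite HMP. apply Rmult_eq_reg_l with (INR (S n)); [|lra]. field_simplify; lra.
    + intros l Hl. unfold yv. rewrite HMP, HSP, HP by auto. field. split; lra.
Qed.


Definition clampv (v : nat -> R) (l : nat) : R := Rmax 0 (Rmin 1 (v l)).

Lemma clampv_cube k v : cube k (clampv v).
Proof. intros l _. unfold clampv. split; [apply Rmax_l|]. apply Rmax_lub; [lra|apply Rmin_l]. Qed.

Lemma clampv_id v l : 0 <= v l <= 1 -> clampv v l = v l.
Proof. intro H. unfold clampv. rewrite Rmin_right by lra. rewrite Rmax_right by lra. auto. Qed.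

Lemma clampv_lip v w l : Rabs (clampv v l - clampv w l) <= Rabs (v l - w l).
Proof.
  unfold clampv, Rmax, Rmin.
  destruct (Rle_dec 1 (v l)), (Rle_dec 1 (w l)); 
  repeat match goal with |- context [Rle_dec ?a ?b] => destruct (Rle_dec a b) end;
  unfold Rabs; repeat match goal with |- context [Rcase_abs ?a] => destruct (Rcase_abs a) end; lra.
Qed.

Lemma VC_clampv N P l x0 : (l < N)%nat -> VC N P (fun v => clampv v l) x0.
Proof.
  intro Hl. unfold clampv. apply VC_max; [apply VC_const|]. apply VC_min; [apply VC_const|]. apply VC_proj; auto.
Qed.

Lemma yv_bound k c l : cube k c -> (l < k)%nat -> 0 <= yv k c l <= rmax k c.
Proof.
  intros H Hl. split; [apply yv_nonneg; auto|]. unfold yv.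
  assert (HS : 0 <= rsum k c) by (apply rsum_nonneg; intros; apply H; auto).
  assert (Hcl : c l <= rsum k c) by (apply rsum_ge; auto; intros; apply H; auto).
  assert (HM := rmax_ge0 k c).
  destruct (Req_dec (rsum k c) 0) as [E|E].
  - unfold Rdiv. rewrite E, Rinv_0. lra.
  - apply Rmult_le_reg_r with (rsum k c); [lra|]. unfold Rdiv. rewrite Rmult_assoc, Rinv_l by auto.
    destruct (H l Hl). nra.
Qed.

Lemma VC_yv_clamp k l v0 : (l < k)%nat -> VC k (fun _ => True) (fun v => yv k (clampv v) l) v0.
Proof.
  intro Hl.
  assert (HM : VC k (fun _ => True) (fun v => rmax k (fun l => clampv v l)) v0)
    by (apply VC_rmax; intros; apply VC_clampv; auto).
  assert (HS : VC k (fun _ => True) (fun v => rsum k (fun l => clampv v l)) v0)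
    by (apply VC_rsum; intros; apply VC_clampv; auto).
  destruct (Req_dec (rsum k (clampv v0)) 0) as [E|E].
  - assert (Z := cube_S_zero k _ (clampv_cube k v0) E).
    assert (HM0 : rmax k (clampv v0) = 0).
    { rewrite (rmax_ext _ _ (fun _ => 0)) by auto. apply Rle_antisym; [apply rmax_le; intros; lra|apply rmax_ge0]. }
    intros eps Heps. destruct (HM eps Heps) as [d [Hd K]]. exists d; split; auto.
    intros x _ Hx. specialize (K x I Hx). simpl in K.
    assert (yv k (clampv v0) l = 0) by (unfold yv; rewrite Z by auto; unfold Rdiv; ring).
    rewrite H. destruct (yv_bound k (clampv x) l (clampv_cube k x) Hl).
    change (rmax k (fun l => clampv x l)) with (rmax k (clampv x)) in K.
    change (rmax k (fun l => clampv v0 l)) with (rmax k (clampv v0)) in K.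
    rewrite HM0 in K. rewrite Rabs_right in * by lra. lra.
  - unfold yv. apply VC_div; auto. apply VC_mult; auto. apply VC_clampv; auto.
Qed.

Lemma VC_X_clamp n J k e i v0 : Eprops n J k e ->
  VC k (fun _ => True) (fun v => Xm n k e (clampv v) i) v0.
Proof.
  intro HE. unfold Xm, Xraw. destruct (le_dec i n) as [Hi|Hi]; [|apply VC_const].
  apply VC_plus.
  - unfold Rdiv. apply (VC_ext _ _ (fun v => / INR (S n) * (1 + - rmax k (fun l => clampv v l)))).
    { intro x. change (rmax k (fun l => clampv x l)) with (rmax k (clampv x)). set (q := rmax k (clampv x)). set (r := INR (S n)). ring. }
    apply VC_scale, VC_plus; [apply VC_const|apply VC_opp, (VC_rmax _ _ k (fun l v => clampv v l)); intros; apply VC_clampv; auto].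
  - apply (VC_rsum _ _ k (fun l v => if Nat.eq_dec (e l) i then yv k (clampv v) l else 0)).
    intros l Hl. destruct (Nat.eq_dec (e l) i); [apply VC_yv_clamp; auto|apply VC_const].
Qed.

Lemma VC_y n J k e l P x0 : Eprops n J k e -> (l < k)%nat ->
  VC (S n) P (fun x => x (e l) - rmin n x) x0.
Proof.
  intros [E1 _] Hl. apply VC_minus.
  - apply VC_proj. destruct (E1 l Hl); lia.
  - apply (VC_rmin _ _ n (fun i x => x i)). intros; apply VC_proj; lia.
Qed.

Lemma y_nonneg n J k e x l : Eprops n J k e -> (l < k)%nat -> 0 <= x (e l) - rmin n x.
Proof. intros [E1 _] Hl. assert (rmin n x <= x (e l)) by (apply rmin_le; apply E1; auto). lra. Qed.

Lemma Psi_bound n J k e x l : Eprops n J k e -> (l < k)%nat ->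
  0 <= Psi n k e x l <= rsum k (fun l => x (e l) - rmin n x).
Proof.
  intros HE Hl. unfold Psi.
  set (y := fun l => x (e l) - rmin n x).
  change (x (e l) - rmin n x) with (y l).
  assert (Hy : forall l, (l < k)%nat -> 0 <= y l) by (intros; apply (y_nonneg n J k); auto).
  assert (HW : 0 <= rsum k y) by (apply rsum_nonneg; auto).
  assert (HyY : y l <= rmax k y) by (apply rmax_ge; auto).
  assert (HY := rmax_ge0 k y). specialize (Hy l Hl).
  destruct (Req_dec (rmax k y) 0) as [E|E].
  - unfold Rdiv. rewrite E, Rinv_0. lra.
  - split.
    + unfold Rdiv. apply Rmult_le_pos; [nra|]. apply Rlt_le, Rinv_0_lt_compat; lra.
    + apply Rmult_le_reg_r with (rmax k y); [lra|]. unfold Rdiv. rewrite Rmult_assoc, Rinv_l by auto. nra.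
Qed.

Lemma VC_Psi n J k e l P x0 : Eprops n J k e -> (l < k)%nat ->
  VC (S n) P (fun x => Psi n k e x l) x0.
Proof.
  intros HE Hl.
  assert (HW : VC (S n) P (fun x => rsum k (fun l => x (e l) - rmin n x)) x0).
  { apply (VC_rsum _ _ k (fun l x => x (e l) - rmin n x)). intros; apply (VC_y n J k); auto. }
  assert (HY : VC (S n) P (fun x => rmax k (fun l => x (e l) - rmin n x)) x0).
  { apply (VC_rmax _ _ k (fun l x => x (e l) - rmin n x)). intros; apply (VC_y n J k); auto. }
  destruct (Req_dec (rmax k (fun l => x0 (e l) - rmin n x0)) 0) as [E|E].
  - assert (Hy0 : forall l, (l < k)%nat -> x0 (e l) - rmin n x0 = 0).
    { intros l' Hl'. assert (0 <= x0 (e l') - rmin n x0) by (apply (y_nonneg n J k); auto).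
      assert (x0 (e l') - rmin n x0 <= rmax k (fun l => x0 (e l) - rmin n x0)) by
        (apply (rmax_ge k (fun l => x0 (e l) - rmin n x0)); auto). lra. }
    assert (HW0 : rsum k (fun l => x0 (e l) - rmin n x0) = 0).
    { rewrite (rsum_ext _ _ (fun _ => 0)) by auto. apply rsum_zero_fn. }
    assert (HP0 : Psi n k e x0 l = 0).
    { unfold Psi. rewrite Hy0 by auto. unfold Rdiv; ring. }
    intros eps Heps. destruct (HW eps Heps) as [d [Hd K]]. exists d; split; auto.
    intros x Px Hx. specialize (K x Px Hx). rewrite HW0 in K. rewrite HP0.
    destruct (Psi_bound n J k e x l HE Hl). rewrite Rminus_0_r in *. rewrite Rabs_right in * by lra. lra.
  - unfold Psi. apply VC_div; auto. apply VC_mult; auto. apply (VC_y n J k); auto.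
Qed.


Notation Tn k := (Compactness.Tn k R).

Fixpoint Build {A : CStarAlg} (k : nat) : (Tn k -> A) -> STy A k :=
  match k return (Tn k -> A) -> STy A k with
  | O => fun F => F tt
  | S k' => fun F t => Build k' (fun r => F (t, r))
  end.

Fixpoint Eval {A : CStarAlg} (k : nat) : STy A k -> Tn k -> A :=
  match k return STy A k -> Tn k -> A with
  | O => fun h _ => h
  | S k' => fun h z => Eval k' (h (fst z)) (snd z)
  end.

Fixpoint tget (k : nat) : Tn k -> nat -> R :=
  match k return Tn k -> nat -> R with
  | O => fun _ _ => 0
  | S k' => fun z l => match l with O => fst z | S l' => tget k' (snd z) l' end
  end.

Fixpoint tn_of (k : nat) (v : nat -> R) : Tn k :=
  match k return Tn k with
  | O => tt
  | S k' => (v O, tn_of k' (fun l => v (S l)))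
  end.

Lemma Build_add {A : CStarAlg} k (F G : Tn k -> A) :
  Build k (fun z => cadd (F z) (G z)) = ST_add k (Build k F) (Build k G).
Proof. induction k; simpl; auto. apply functional_extensionality; intro t. apply IHk. Qed.

Lemma Build_scal {A : CStarAlg} k a (F : Tn k -> A) :
  Build k (fun z => cscal a (F z)) = ST_scal k a (Build k F).
Proof. induction k; simpl; auto. apply functional_extensionality; intro t. apply IHk. Qed.

Lemma Build_mul {A : CStarAlg} k (F G : Tn k -> A) :
  Build k (fun z => cmul (F z) (G z)) = ST_mul k (Build k F) (Build k G).
Proof. induction k; simpl; auto. apply functional_extensionality; intro t. apply IHk. Qed.

Lemma Build_star {A : CStarAlg} k (F : Tn k -> A) :
  Build k (fun z => cstar (F z)) = ST_star k (Build k F).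
Proof. induction k; simpl; auto. apply functional_extensionality; intro t. apply IHk. Qed.

Lemma Build_zero {A : CStarAlg} k : Build k (fun _ => @c0 A) = ST_zero k.
Proof. induction k; simpl; auto. apply functional_extensionality; intro t. apply IHk. Qed.

Lemma Build_zero_inv {A : CStarAlg} k (F : Tn k -> A) : Build k F = ST_zero k -> forall z, F z = c0.
Proof.
  induction k; simpl; intros H z.
  - destruct z; auto.
  - destruct z as [t r]. apply (IHk (fun r => F (t, r))). change (Build k (fun r => F (t, r))) with ((fun t => Build k (fun r => F (t, r))) t).
    rewrite H. reflexivity.
Qed.

Lemma Build_Eval {A : CStarAlg} k (h : STy A k) : Build k (Eval k h) = h.
Proof. induction k; simpl; auto. apply functional_extensionality; intro t. apply IHk. Qed.

Lemma tn_of_tget k z : tn_of k (tget k z) = z.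
Proof. induction k; simpl; destruct z; auto. f_equal. apply IHk. Qed.

Lemma tget_tn_of k v l : (l < k)%nat -> tget k (tn_of k v) l = v l.
Proof.
  revert v l; induction k; simpl; intros v l Hl; [lia|].
  destruct l; auto. rewrite IHk by lia. auto.
Qed.

Lemma tn_of_ext k v w : (forall l, (l < k)%nat -> v l = w l) -> tn_of k v = tn_of k w.
Proof.
  revert v w; induction k; simpl; intros v w H; auto. f_equal; [apply H; lia|]. apply IHk. intros; apply H; lia.
Qed.

Lemma close_tget k d z z0 : Compactness.close_n k d z z0 -> near_vec k d (tget k z) (tget k z0).
Proof.
  induction k; simpl; intros H l Hl; [lia|]. destruct z as [t r], z0 as [t0 r0]. destruct H as [H1 H2].
  destruct l; simpl; auto. apply IHk; auto; lia.
Qed.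

Lemma close_tn_of k d v w : near_vec k d v w -> Compactness.close_n k d (tn_of k v) (tn_of k w).
Proof.
  revert v w; induction k; simpl; intros v w H; auto. split.
  - apply H; lia.
  - apply IHk. intros l Hl. apply H; lia.
Qed.

Lemma bounded_cube k z : Compactness.bounded_n k (tn_of k (fun _ => 0)) (tn_of k (fun _ => 1)) z <-> cube k (tget k z).
Proof.
  induction k; simpl.
  - split; auto. intros _ l Hl; lia.
  - destruct z as [t r]. split.
    + intros [H1 H2] l Hl. destruct l; simpl; auto. apply IHk in H2. apply H2; lia.
    + intro H. split; [apply (H 0%nat); lia|]. apply IHk. intros l Hl. apply (H (S l)); lia.
Qed.

Lemma tget_ext k v z : (forall l, (l < k)%nat -> v l = tget k z l) -> tn_of k v = z.
Proof. intro H. rewrite <- (tn_of_tget k z). apply tn_of_ext; auto. Qed.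

Definition AC {A : CStarAlg} (N : nat) (P : (nat -> R) -> Prop) (F : (nat -> R) -> A) (x0 : nat -> R) :=
  forall eps, 0 < eps -> exists d, 0 < d /\
    forall x, P x -> near_vec N d x x0 -> cdist (F x) (F x0) < eps.

Lemma AC_comp {A : CStarAlg} N P k (H : (nat -> R) -> A) (Phi : (nat -> R) -> nat -> R) x0 :
  AC k (fun _ => True) H (Phi x0) -> (forall l, (l < k)%nat -> VC N P (fun x => Phi x l) x0) ->
  AC N P (fun x => H (Phi x)) x0.
Proof.
  intros H1 H2 eps Heps. destruct (H1 eps Heps) as [d [Hd K]].
  destruct (VC_all N P k (fun l x => Phi x l) x0 H2 d Hd) as [d2 [Hd2 K2]].
  exists d2; split; auto. intros x Px Hx. apply K; auto. intros l Hl. apply K2; auto.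
Qed.

Lemma AC_scal {A : CStarAlg} N P (r : (nat -> R) -> R) (F : (nat -> R) -> A) x0 :
  VC N P r x0 -> AC N P F x0 -> AC N P (fun x => cscal (mkC (r x) 0) (F x)) x0.
Proof.
  intros H1 H2 eps Heps.
  set (B := cnorm (F x0) + 1). assert (HB : 0 < B) by (unfold B; assert (T := cnorm_nonneg A (F x0)); lra).
  set (C := Rabs (r x0) + 1). assert (HC : 0 < C) by (unfold C; assert (T := Rabs_pos (r x0)); lra).
  destruct (H1 (eps / (2 * B))) as [d1 [Hd1 K1]]. { apply Rdiv_lt_0_compat; lra. }
  destruct (H2 (Rmin 1 (eps / (2 * C)))) as [d2 [Hd2 K2]]. { apply Rmin_pos; [lra|apply Rdiv_lt_0_compat; lra]. }
  exists (Rmin d1 d2). split; [apply Rmin_pos; auto|]. intros x Px Hx.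
  specialize (K1 x Px (near_vec_mono _ _ _ _ _ (Rmin_l _ _) Hx)).
  specialize (K2 x Px (near_vec_mono _ _ _ _ _ (Rmin_r _ _) Hx)).
  eapply Rle_lt_trans; [apply cdist_scal|].
  assert (Hn : cnorm (F x) <= B).
  { unfold B. assert (T := cdist_tri (F x) (F x0) c0). rewrite !cdist_c0 in T.
    assert (cdist (F x) (F x0) < 1) by (eapply Rlt_le_trans; [apply K2|apply Rmin_l]). lra. }
  assert (T1 : Rabs (r x - r x0) * cnorm (F x) <= eps / (2 * B) * B).
  { apply Rmult_le_compat; auto using Rabs_pos, cnorm_nonneg; lra. }
  assert (T2 : Rabs (r x0) * cdist (F x) (F x0) <= C * (eps / (2 * C))).
  { apply Rmult_le_compat; auto using Rabs_pos, cdist_nonneg.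
    - unfold C; lra.
    - left. eapply Rlt_le_trans; [apply K2|apply Rmin_r]. }
  replace (eps / (2 * B) * B) with (eps / 2) in T1 by (field; lra).
  replace (C * (eps / (2 * C))) with (eps / 2) in T2 by (field; lra).
  assert (T3 : Rabs (r x - r x0) * cnorm (F x) < eps / 2 \/ Rabs (r x0) * cdist (F x) (F x0) < eps / 2 \/
     (Rabs (r x - r x0) * cnorm (F x) <= eps/2 /\ Rabs (r x0) * cdist (F x) (F x0) <= eps/2)) by (right; right; auto).
  (* strictness: use strict bound on second term when r x0 <> 0 else it is 0 *)
  destruct (Req_dec (r x0) 0) as [E|E].
  - assert (Z : Rabs (r x0) * cdist (F x) (F x0) = 0) by (rewrite E, Rabs_R0; ring).
    rewrite Z.
    destruct (Req_dec (cnorm (F x)) 0) as [E2|E2]; [rewrite E2; lra|].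
    assert (Rabs (r x - r x0) * cnorm (F x) < eps / (2 * B) * B).
    { apply Rle_lt_trans with (Rabs (r x - r x0) * B).
      - apply Rmult_le_compat_l; auto using Rabs_pos.
      - apply Rmult_lt_compat_r; auto. }
    replace (eps / (2 * B) * B) with (eps / 2) in H by (field; lra). lra.
  - assert (Rabs (r x0) * cdist (F x) (F x0) < C * (eps / (2 * C))).
    { apply Rle_lt_trans with (C * cdist (F x) (F x0)).
      - apply Rmult_le_compat_r; [apply cdist_nonneg|unfold C; lra].
      - apply Rmult_lt_compat_l; auto. eapply Rlt_le_trans; [apply K2|apply Rmin_r]. }
    replace (C * (eps / (2 * C))) with (eps / 2) in H by (field; lra). lra.
Qed.


Definition outT (k : nat) (z : Tn k) := exists l, (l < k)%nat /\ (tget k z l <= 0 \/ 1 <= tget k z l).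

Definition UC {A : CStarAlg} (k : nat) (F : Tn k -> A) :=
  forall eps, 0 < eps -> exists d, 0 < d /\ forall z z', Compactness.close_n k d z z' -> cdist (F z) (F z') <= eps.

Lemma distle_refl {A : CStarAlg} k (a : STy A k) e : 0 <= e -> ST_distle k a a e.
Proof. induction k; simpl; intros; [rewrite cdist_self; lra|]. apply IHk; auto. Qed.

Lemma inSusp_zero {A : CStarAlg} (D : A -> Prop) k : D c0 -> inSusp A D k (ST_zero k).
Proof.
  intro HD. induction k; simpl; auto. split; [|split].
  - intros; auto.
  - intros; auto.
  - intros t Ht eps Heps. exists 1. split; [lra|]. intros. apply distle_refl; lra.
Qed.

Lemma distle_Build {A : CStarAlg} k (F G : Tn k -> A) e :
  (forall z, cdist (F z) (G z) <= e) -> ST_distle k (Build k F) (Build k G) e.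
Proof. induction k; simpl; intro H; auto. Qed.

Lemma close_refl k d z : 0 < d -> Compactness.close_n k d z z.
Proof. induction k; simpl; auto. destruct z as [t r]. intro. split; auto. rewrite Rminus_diag, Rabs_R0; auto. Qed.

Lemma inSusp_Build {A : CStarAlg} (D : A -> Prop) k (F : Tn k -> A) :
  (forall z, D (F z)) -> (forall z, outT k z -> F z = c0) -> UC k F -> inSusp A D k (Build k F).
Proof.
  revert F. induction k; simpl; intros F H1 H2 H3; auto.
  split; [|split].
  - intros t Ht. apply IHk.
    + intros; apply H1.
    + intros r [l [Hl Hr]]. apply H2. exists (S l). split; [lia|]. simpl; auto.
    + intros eps Heps. destruct (H3 eps Heps) as [d [Hd K]]. exists d; split; auto.
      intros z z' Hz. apply K. simpl. split; auto. rewrite Rminus_diag, Rabs_R0; auto.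
  - intros t Ht. rewrite <- Build_zero. f_equal. apply functional_extensionality; intro r.
    apply H2. exists 0%nat. split; [lia|]. simpl; auto.
  - intros t Ht eps Heps. destruct (H3 eps Heps) as [d [Hd K]]. exists d; split; auto.
    intros s Hs Hst. apply distle_Build. intro r. apply K. simpl. split; auto. apply close_refl; auto.
Qed.

Lemma UC_from_AC {A : CStarAlg} k (G : (nat -> R) -> A) :
  (forall v0, cube k v0 -> AC k (fun _ => True) G v0) -> UC k (fun z => G (clampv (tget k z))).
Proof.
  intros HG eps Heps.
  assert (Hd : forall z : Tn k, {d : RIneq.posreal | cube k (tget k z) ->
     forall v, near_vec k (2 * d) v (tget k z) -> cdist (G v) (G (tget k z)) < eps / 2}).
  { intro z. destruct (excluded_middle_informative (cube k (tget k z))) as [Hc|Hc].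
    - apply constructive_indefinite_description.
      destruct (HG _ Hc (eps / 2)) as [d [Hd K]]; [lra|].
      assert (Hp : 0 < d / 2) by lra. exists (RIneq.mkposreal _ Hp). intros _ v Hv. apply K; auto.
      simpl in Hv. replace (2 * (d / 2)) with d in Hv by field. auto.
    - exists (RIneq.mkposreal 1 Rlt_0_1). intro; contradiction. }
  set (delta := fun z => proj1_sig (Hd z)).
  destruct (Compactness.compactness_value k (tn_of k (fun _ => 0)) (tn_of k (fun _ => 1)) delta) as [d Hdc].
  exists d. split; [apply RIneq.cond_pos|]. intros z z' Hzz.
  set (c := clampv (tget k z)). set (c' := clampv (tget k z')).
  assert (Hcc : near_vec k d c c').
  { intros l Hl. eapply Rle_lt_trans; [apply clampv_lip|]. apply close_tget; auto. }
  assert (Hb : Compactness.bounded_n k (tn_of k (fun _ => 0)) (tn_of k (fun _ => 1)) (tn_of k c)).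
  { apply bounded_cube. intros l Hl. rewrite tget_tn_of by auto. apply (clampv_cube k (tget k z) l Hl). }
  specialize (Hdc _ Hb).
  apply NNPP. intro Hne. apply Hdc. intros [t [Ht [Hct Hdt]]].
  apply Hne. apply bounded_cube in Ht.
  assert (P := proj2_sig (Hd t) Ht). fold (delta t) in P.
  assert (Hc1 : near_vec k (2 * delta t) c (tget k t)).
  { intros l Hl. assert (T := close_tget _ _ _ _ Hct l Hl). rewrite tget_tn_of in T by auto.
    assert (0 < delta t) by apply RIneq.cond_pos. lra. }
  assert (Hc2 : near_vec k (2 * delta t) c' (tget k t)).
  { intros l Hl. assert (T := close_tget _ _ _ _ Hct l Hl). rewrite tget_tn_of in T by auto.
    specialize (Hcc l Hl).
    replace (c' l - tget k t l) with ((c l - tget k t l) - (c l - c' l)) by ring.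
    eapply Rle_lt_trans; [apply Rabs_triang|]. rewrite Rabs_Ropp. simpl in Hdt. lra. }
  assert (T1 := P c Hc1). assert (T2 := P c' Hc2).
  assert (T3 := cdist_tri (G c) (G (tget k t)) (G c')). rewrite (cdist_sym (G (tget k t))) in T3. lra.
Qed.

Lemma Eval_zero {A : CStarAlg} k z : Eval k (@ST_zero A k) z = c0.
Proof. induction k; simpl; auto. Qed.

Lemma Eval_D {A : CStarAlg} (D : A -> Prop) k h : D c0 -> inSusp A D k h -> forall z, D (Eval k h z).
Proof.
  revert h; induction k; simpl; intros h HD H z; auto.
  destruct H as [H1 [H2 H3]]. destruct z as [t r]. simpl.
  destruct (Rle_dec 0 t), (Rle_dec t 1).
  - apply IHk; auto.
  - rewrite H2 by lra. rewrite Eval_zero; auto.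
  - rewrite H2 by lra. rewrite Eval_zero; auto.
  - rewrite H2 by lra. rewrite Eval_zero; auto.
Qed.

Lemma Eval_out {A : CStarAlg} (D : A -> Prop) k h : inSusp A D k h -> forall z, outT k z -> Eval k h z = c0.
Proof.
  revert h; induction k; simpl; intros h H z [l [Hl Hz]]; [lia|].
  destruct H as [H1 [H2 H3]]. destruct z as [t r]. simpl in *.
  destruct l.
  - rewrite H2 by lra. apply Eval_zero.
  - destruct (Rle_dec 0 t), (Rle_dec t 1).
    + apply (IHk (h t)); [apply H1; lra|]. exists l. split; [lia|auto].
    + rewrite H2 by lra. apply Eval_zero.
    + rewrite H2 by lra. apply Eval_zero.
    + rewrite H2 by lra. apply Eval_zero.
Qed.

Lemma Eval_distle {A : CStarAlg} k (a b : STy A k) e : ST_distle k a b e -> forall z, cdist (Eval k a z) (Eval k b z) <= e.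
Proof. revert a b; induction k; simpl; intros a b H z; auto. Qed.

Lemma h_cont {A : CStarAlg} (D : A -> Prop) k (h : STy A (S k)) : inSusp A D (S k) h ->
  forall t0 eps, 0 < eps -> exists d, 0 < d /\ forall s, Rabs (s - t0) < d -> ST_distle k (h s) (h t0) eps.
Proof.
  intros [H1 [H2 H3]] t0 eps Heps.
  destruct (Rle_dec 0 t0), (Rle_dec t0 1).
  - destruct (H3 t0 ltac:(lra) eps Heps) as [d [Hd K]]. exists d; split; auto.
    intros s Hs. destruct (Rle_dec 0 s), (Rle_dec s 1).
    + apply K; auto.
    + rewrite (H2 s) by lra. rewrite <- (H2 1) by lra. apply K; [lra|].
      revert Hs. unfold Rabs; repeat destruct Rcase_abs; lra.
    + rewrite (H2 s) by lra. rewrite <- (H2 0) by lra. apply K; [lra|].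
      revert Hs. unfold Rabs; repeat destruct Rcase_abs; lra.
    + lra.
  - exists (t0 - 1). split; [lra|]. intros s Hs. rewrite (H2 s), (H2 t0) by (revert Hs; unfold Rabs; repeat destruct Rcase_abs; lra).
    apply distle_refl; lra.
  - exists (- t0). split; [lra|]. intros s Hs. rewrite (H2 s), (H2 t0) by (revert Hs; unfold Rabs; repeat destruct Rcase_abs; lra).
    apply distle_refl; lra.
  - lra.
Qed.

Lemma Eval_cont {A : CStarAlg} (D : A -> Prop) k h : D c0 -> inSusp A D k h ->
  forall z0 eps, 0 < eps -> exists d, 0 < d /\ forall z, Compactness.close_n k d z z0 -> cdist (Eval k h z) (Eval k h z0) < eps.
Proof.
  revert h; induction k; simpl; intros h HD H z0 eps Heps.
  - exists 1. split; [lra|]. intros. rewrite cdist_self; auto.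
  - destruct z0 as [t0 r0].
    assert (Ht0 : inSusp A D k (h t0)).
    { destruct H as [H1 [H2 H3]]. destruct (Rle_dec 0 t0), (Rle_dec t0 1).
      - apply H1; lra.
      - rewrite H2 by lra. apply inSusp_zero; auto.
      - rewrite H2 by lra. apply inSusp_zero; auto.
      - rewrite H2 by lra. apply inSusp_zero; auto. }
    destruct (h_cont D k h H t0 (eps / 2)) as [d1 [Hd1 K1]]; [lra|].
    destruct (IHk (h t0) HD Ht0 r0 (eps / 2)) as [d2 [Hd2 K2]]; [lra|].
    exists (Rmin d1 d2). split; [apply Rmin_pos; auto|].
    intros [t r] [Htt Hrr]. simpl.
    assert (T1 := Eval_distle k _ _ _ (K1 t (Rlt_le_trans _ _ _ Htt (Rmin_l _ _))) r).
    assert (Hrr' : Compactness.close_n k d2 r r0).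
    { clear -Hrr. revert r r0 Hrr. generalize (Rmin_r d1 d2). generalize (Rmin d1 d2). intros m Hm.
      induction k; simpl; auto. intros [a b] [a0 b0] [X Y]. split; [lra|]. apply IHk; auto. }
    assert (T2 := K2 r Hrr').
    assert (T3 := cdist_tri (Eval k (h t) r) (Eval k (h t0) r) (Eval k (h t0) r0)). lra.
Qed.


Definition inJb (J : list nat) (i : nat) : bool := if in_dec Nat.eq_dec i J then true else false.
Definition Kl (n : nat) (J : list nat) : list nat := filter (fun i => negb (inJb J i)) (seq 0 (S n)).
Definition eK (n : nat) (J : list nat) (l : nat) : nat := nth l (Kl n J) 0%nat.

Lemma Kl_length n J p : NoDup J -> (forall j, In j J -> (j <= n)%nat) -> length J = (p + 1)%nat ->
  length (Kl n J) = (n - p)%nat.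
Proof.
  intros Hnd Hn Hl.
  assert (H := filter_length (inJb J) (seq 0 (S n))). rewrite length_seq in H.
  assert (E : length (filter (inJb J) (seq 0 (S n))) = length J).
  { apply Nat.le_antisymm.
    - apply NoDup_incl_length.
      + apply NoDup_filter, seq_NoDup.
      + intros i Hi. apply filter_In in Hi. destruct Hi as [_ Hi]. unfold inJb in Hi.
        destruct (in_dec Nat.eq_dec i J); auto; discriminate.
    - apply NoDup_incl_length; auto. intros i Hi. apply filter_In. split.
      + apply in_seq. specialize (Hn i Hi). lia.
      + unfold inJb. destruct (in_dec Nat.eq_dec i J); auto. }
  unfold Kl. lia.
Qed.

Lemma eK_props n J : Eprops n J (length (Kl n J)) (eK n J).
Proof.
  split; [|split].
  - intros l Hl. unfold eK. assert (T := nth_In (Kl n J) 0%nat Hl).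
    assert (HK : forall i, In i (Kl n J) -> (i <= n)%nat /\ ~ In i J).
    { intros i Hi. unfold Kl in Hi. apply filter_In in Hi. destruct Hi as [T1 T2]. apply in_seq in T1.
      split; [lia|]. unfold inJb in T2. destruct (in_dec Nat.eq_dec i J); auto; discriminate. }
    apply HK; auto.
  - intros l l' Hl Hl' E. unfold eK in E. eapply NoDup_nth; eauto.
    unfold Kl. apply NoDup_filter, seq_NoDup.
  - intros i Hi HiJ. assert (T : In i (Kl n J)).
    { unfold Kl. apply filter_In. split; [apply in_seq; lia|]. unfold inJb.
      destruct (in_dec Nat.eq_dec i J); auto. }
    destruct (In_nth _ _ 0%nat T) as [l [Hl E]]. exists l. split; auto.
Qed.

Lemma NoDup_remove' (J : list nat) j : NoDup J -> NoDup (remove Nat.eq_dec j J).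
Proof.
  induction J; simpl; intro H; auto. inversion H; subst.
  destruct (Nat.eq_dec j a); auto. constructor; auto.
  intro T. apply in_remove in T. destruct T; auto.
Qed.

Lemma lsum_zero J g : (forall j, In j J -> 0 <= g j) -> lsum J g = 0 -> forall j, In j J -> g j = 0.
Proof. intros H E j Hj. assert (g j <= lsum J g) by (apply lsum_ge; auto). assert (0 <= g j) by auto. lra. Qed.

Lemma cos_AC {A : CStarAlg} n (f : SFun A) x0 : cont_on_simplex n f -> in_simplex n x0 ->
  AC (S n) (in_simplex n) f x0.
Proof.
  intros H Hx eps Heps. destruct (H x0 Hx eps Heps) as [d [Hd K]]. exists d; split; auto.
  intros x Px Hxx. apply K; auto. intros i Hi. apply Hxx. lia.
Qed.

Lemma AC_cos {A : CStarAlg} n (f F : SFun A) :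
  (forall x0, in_simplex n x0 -> AC (S n) (in_simplex n) F x0) ->
  (forall x, in_simplex n x -> f x = F x) -> cont_on_simplex n f.
Proof.
  intros H E x0 Hx eps Heps. destruct (H x0 Hx eps Heps) as [d [Hd K]]. exists d; split; auto.
  intros y Hy Hyy. rewrite !E by auto. apply K; auto. intros i Hi. apply Hyy. lia.
Qed.

Lemma f_bad {A : CStarAlg} I n J (f : SFun A) x : inB_L A I n J f -> bad n J x -> f x = c0.
Proof.
  intros [[H1 [H2 [H3 H4]]] H5] [Hb|[i [Hi [HiJ HD]]]].
  - apply H3; auto.
  - apply (H5 i); auto.
Qed.

Lemma Xm_ext n k e v w : (forall l, (l < k)%nat -> v l = w l) -> Xm n k e v = Xm n k e w.
Proof.
  intro H. unfold Xm. rewrite (rmax_ext k v w) by auto. apply Xraw_ext.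
  intros l Hl. unfold yv. rewrite (rmax_ext k v w), (rsum_ext k v w), H by auto. reflexivity.
Qed.

Lemma clampv_idem v : clampv (clampv v) = clampv v.
Proof. apply functional_extensionality; intro l. apply clampv_id. apply (clampv_cube (S l)). lia. Qed.

Lemma FJ_W n J k e x : Eprops n J k e -> (forall j, In j J -> (j <= n)%nat) -> inFJ n J x ->
  rsum k (fun l => x (e l) - rmin n x) = 1 - INR (S n) * rmin n x.
Proof.
  intros HE HJn [Hx HFJ]. assert (HE' := HE). destruct HE' as [E1 [E2 E3]].
  destruct Hx as [Hx1 [Hx2 Hx3]].
  set (mn := rmin n x).
  assert (xj : forall j, In j J -> x j = mn).
  { intros j Hj. apply Rle_antisym; [|apply rmin_le; auto].
    destruct (rmin_ex n x) as [i [Hi Ei]]. unfold mn; rewrite Ei. apply HFJ; auto. }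
  set (y := fun l => x (e l) - mn).
  assert (Hrep : x = Xraw n k e mn y).
  { apply functional_extensionality; intro i. destruct (le_dec i n) as [Hi|Hi].
    - destruct (in_dec Nat.eq_dec i J) as [HiJ|HiJ].
      + rewrite (Xraw_J n J) by auto. auto.
      + destruct (E3 i Hi HiJ) as [l [Hl <-]]. rewrite (Xraw_e n J) by auto. unfold y; ring.
    - rewrite Xraw_out by lia. apply Hx2; lia. }
  assert (Hsum : 1 = INR (S n) * mn + rsum k y).
  { rewrite <- Hx3, Hrep at 1. apply (Xraw_sum n J); auto. }
  lra.
Qed.


Definition phiF {A : CStarAlg} (n k : nat) (e : nat -> nat) (f : SFun A) : STy A k :=
  Build k (fun z => f (Xm n k e (clampv (tget k z)))).

Lemma clampv_out k z : outT k z -> exists l, (l < k)%nat /\ (clampv (tget k z) l = 0 \/ clampv (tget k z) l = 1).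
Proof.
  intros [l [Hl H]]. exists l. split; auto. unfold clampv.
  destruct H; [left|right].
  - rewrite Rmin_right by lra. apply Rmax_left; lra.
  - rewrite Rmin_left by lra. apply Rmax_right; lra.
Qed.

Lemma G_AC {A : CStarAlg} n J k e (f : SFun A) v0 : Eprops n J k e -> cont_on_simplex n f ->
  AC k (fun _ => True) (fun v => f (Xm n k e (clampv v))) v0.
Proof.
  intros HE Hf eps Heps.
  assert (Hs0 : in_simplex n (Xm n k e (clampv v0))) by (apply (X_simplex n J); auto; apply clampv_cube).
  destruct (Hf _ Hs0 eps Heps) as [d1 [Hd1 K1]].
  destruct (VC_all k (fun _ => True) (S n) (fun i v => Xm n k e (clampv v) i) v0
     (fun i _ => VC_X_clamp n J k e i v0 HE) d1 Hd1) as [d [Hd K]].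
  exists d; split; auto. intros v _ Hv. apply K1.
  - apply (X_simplex n J); auto; apply clampv_cube.
  - intros i Hi. apply (K v I Hv i). lia.
Qed.

Lemma phi_inSusp {A : CStarAlg} (I : nat -> A -> Prop) n J k e j0 (f : SFun A) :
  (forall j, (j <= n)%nat -> is_Cideal A (I j)) -> Eprops n J k e ->
  (forall j, In j J -> (j <= n)%nat) -> In j0 J -> inB_L A I n J f ->
  inSusp A (fun a => forall j, In j J -> I j a) k (phiF n k e f).
Proof.
  intros HI HE HJn Hj0 Hf. unfold phiF. apply inSusp_Build.
  - intros z j Hj. destruct Hf as [[_ [_ [_ H4]]] _]. apply H4; auto.
    apply (X_DeltaJ n J); auto. apply clampv_cube.
  - intros z Hz. apply (f_bad I n J); auto. destruct (clampv_out k z Hz) as [l [Hl Hc]].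
    apply (X_bad n J k e _ l j0); auto. apply clampv_cube.
  - replace (fun z => f (Xm n k e (clampv (tget k z)))) with
      (fun z => (fun v => f (Xm n k e (clampv v))) (clampv (tget k z))).
    2:{ apply functional_extensionality; intro z. rewrite clampv_idem. reflexivity. }
    apply (UC_from_AC k (fun v => f (Xm n k e (clampv v)))). intros v0 _. apply (G_AC n J); auto. destruct Hf as [[_ [H2 _]] _]; auto.
Qed.

Lemma fold_eval {A : CStarAlg} (ls : list (list nat * SFun A)) x :
  (forall Lg, In Lg ls -> snd Lg x = c0) ->
  fold_right (fun Lg acc => SF_add (snd Lg) acc) SF_zero ls x = c0.
Proof.
  induction ls; intro H; [reflexivity|]. cbn [fold_right]. unfold SF_add at 1.
  rewrite H by (left; auto). rewrite IHls by (intros; apply H; right; auto). apply cadd_0.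
Qed.

Lemma phi_kernel_bwd {A : CStarAlg} (I : nat -> A -> Prop) n J k e p (f : SFun A) :
  Eprops n J k e -> (forall j, In j J -> (j <= n)%nat) -> NoDup J -> length J = (p + 1)%nat ->
  inQ A I n (Z.of_nat p - 1) f -> phiF n k e f = ST_zero k.
Proof.
  intros HE HJn HJnd HJl [ls [Hls ->]]. unfold phiF. rewrite <- Build_zero. f_equal.
  apply functional_extensionality; intro z. apply fold_eval. intros [L g] HLg. simpl.
  rewrite Forall_forall in Hls. destruct (Hls _ HLg) as [HLnd [HLn [HLlen HB]]]. simpl in *.
  destruct (classic (exists j, In j J /\ ~ In j L)) as [[j [Hj HjL]]|Hno].
  - destruct HB as [_ HB]. apply (HB j); auto. apply (X_DeltaJ n J); auto. apply clampv_cube.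
  - exfalso. assert (incl J L).
    { intros j Hj. apply NNPP. intro HjL. apply Hno. exists j; auto. }
    assert (T := NoDup_incl_length HJnd H). lia.
Qed.


Definition alJ (n : nat) (J : list nat) (x : nat -> R) : R := lsum J (fun j => x j - rmin n x).
Definition hj (n : nat) (J : list nat) (j : nat) (x : nat -> R) : R := (x j - rmin n x) / alJ n J x.

Lemma alJ_terms n J x : (forall j, In j J -> (j <= n)%nat) -> forall j, In j J -> 0 <= x j - rmin n x.
Proof. intros HJn j Hj. assert (rmin n x <= x j) by (apply rmin_le; auto). lra. Qed.

Lemma hj_bound n J j x : (forall j, In j J -> (j <= n)%nat) -> In j J -> 0 <= hj n J j x <= 1.
Proof.
  intros HJn Hj. unfold hj, alJ.
  assert (T0 := alJ_terms n J x HJn j Hj).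
  assert (T1 : x j - rmin n x <= lsum J (fun j => x j - rmin n x)) by
    (apply (lsum_ge J (fun j => x j - rmin n x)); auto; apply alJ_terms; auto).
  destruct (Req_dec (lsum J (fun j => x j - rmin n x)) 0) as [E|E].
  - unfold Rdiv. rewrite E, Rinv_0. lra.
  - split.
    + unfold Rdiv. apply Rmult_le_pos; auto. apply Rlt_le, Rinv_0_lt_compat; lra.
    + apply Rmult_le_reg_r with (lsum J (fun j => x j - rmin n x)); [lra|].
      unfold Rdiv. rewrite Rmult_assoc, Rinv_l by auto. lra.
Qed.

Lemma alJ_zero_FJ n J x : (forall j, In j J -> (j <= n)%nat) -> in_simplex n x -> alJ n J x = 0 -> inFJ n J x.
Proof.
  intros HJn Hx E. split; auto. intros j Hj i Hi.
  assert (T := lsum_zero J (fun j => x j - rmin n x) (alJ_terms n J x HJn) E j Hj). simpl in T.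
  assert (rmin n x <= x i) by (apply rmin_le; auto). lra.
Qed.

Lemma fold_map_eval {A : CStarAlg} n J (f : SFun A) (L : list nat) x :
  fold_right (fun Lg acc => SF_add (snd Lg) acc) SF_zero
    (map (fun j => (remove Nat.eq_dec j J, fun x => cscal (mkC (hj n J j x) 0) (f x))) L) x
  = cscal (mkC (lsum L (fun j => hj n J j x)) 0) (f x).
Proof.
  induction L; cbn [fold_right map lsum].
  - unfold SF_zero. symmetry; apply cscal_C0.
  - unfold SF_add at 1. cbn [snd]. rewrite IHL. rewrite cscal_radd. reflexivity.
Qed.

Lemma Delta_rmin n j x : (j <= n)%nat -> in_Delta_j n j x -> x j = rmin n x.
Proof.
  intros Hj [_ H]. apply Rle_antisym; [|apply rmin_le; auto].
  destruct (rmin_ex n x) as [i [Hi Ei]]. rewrite Ei. auto.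
Qed.

Lemma phi_kernel_fwd {A : CStarAlg} (I : nat -> A -> Prop) n J k e p (f : SFun A) :
  (forall j, (j <= n)%nat -> is_Cideal A (I j)) -> Eprops n J k e ->
  (forall j, In j J -> (j <= n)%nat) -> NoDup J -> length J = (p + 1)%nat ->
  inB_L A I n J f -> phiF n k e f = ST_zero k -> inQ A I n (Z.of_nat p - 1) f.
Proof.
  intros HI HE HJn HJnd HJl Hf Hphi.
  assert (Hz := Build_zero_inv k _ Hphi).
  assert (Hcube : forall v, cube k v -> f (Xm n k e v) = c0).
  { intros v Hv. specialize (Hz (tn_of k v)). rewrite <- Hz. f_equal. apply Xm_ext.
    intros l Hl. rewrite clampv_id; rewrite tget_tn_of by auto; auto. }
  assert (HFJ0 : forall x, inFJ n J x -> f x = c0).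
  { intros x Hx. destruct (X_Psi n J k e x HE HJn Hx) as [Hc Hxx]. rewrite <- Hxx. auto. }
  destruct Hf as [[Hf1 [Hf2 [Hf3 Hf4]]] Hf5].
  exists (map (fun j => (remove Nat.eq_dec j J, fun x => cscal (mkC (hj n J j x) 0) (f x))) J).
  split.
  - rewrite Forall_forall. intros [L g] HLg. apply in_map_iff in HLg.
    destruct HLg as [j [Ej Hj]]. inversion Ej; subst L g; clear Ej. simpl.
    split; [apply NoDup_remove'; auto|]. split.
    { intros i Hi. apply in_remove in Hi. apply HJn; tauto. }
    split.
    { assert (T := remove_length_lt Nat.eq_dec J j Hj). lia. }
    split; [split; [|split; [|split]]|].
    + intros x Hx. rewrite Hf1 by auto. apply cscal_c0.
    + apply (AC_cos n _ (fun x => cscal (mkC (hj n J j x) 0) (f x))); [|auto].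
      intros x0 Hx0. destruct (Req_dec (alJ n J x0) 0) as [E|E].
      * assert (Hfx0 : f x0 = c0) by (apply HFJ0, alJ_zero_FJ; auto).
        intros eps Heps. destruct (cos_AC n f x0 Hf2 Hx0 eps Heps) as [d [Hd K]].
        exists d; split; auto. intros x Px Hx. specialize (K x Px Hx).
        rewrite Hfx0 in *. rewrite cscal_c0, cdist_c0, cnorm_scal_real.
        rewrite cdist_c0 in K. destruct (hj_bound n J j x HJn Hj).
        rewrite Rabs_right by lra. assert (T := cnorm_nonneg A (f x)). nra.
      * apply AC_scal; [|apply cos_AC; auto].
        unfold hj, alJ. apply VC_div; auto.
        -- apply VC_minus; [apply VC_proj; specialize (HJn j Hj); lia|].
           apply (VC_rmin _ _ n (fun i x => x i)). intros; apply VC_proj; lia.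
        -- apply (VC_lsum _ _ J (fun j x => x j - rmin n x)). intros j' Hj'.
           apply VC_minus; [apply VC_proj; specialize (HJn j' Hj'); lia|].
           apply (VC_rmin _ _ n (fun i x => x i)). intros; apply VC_proj; lia.
    + intros x Hx. rewrite Hf3 by auto. apply cscal_c0.
    + intros i x Hi Hx. destruct (HI i Hi) as [_ [_ [Hs _]]]. apply Hs. apply Hf4; auto.
    + intros j' x Hj' Hnot Hx. destruct (Nat.eq_dec j' j) as [->|Hne].
      * assert (Ex := Delta_rmin n j x Hj' Hx). unfold hj. rewrite Ex, Rminus_diag.
        unfold Rdiv. rewrite Rmult_0_l. apply cscal_C0.
      * rewrite (Hf5 j' x) by (auto; intro T; apply Hnot; apply in_in_remove; auto). apply cscal_c0.
  - apply functional_extensionality; intro x. rewrite fold_map_eval.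
    destruct (excluded_middle_informative (in_simplex n x)) as [Hx|Hx].
    + destruct (Req_dec (alJ n J x) 0) as [E|E].
      * rewrite (HFJ0 x) by (apply alJ_zero_FJ; auto). symmetry; apply cscal_c0.
      * unfold hj. rewrite lsum_div. fold (alJ n J x). unfold Rdiv. rewrite Rinv_r by auto.
        symmetry. apply cscal_1.
    + rewrite Hf1 by auto. symmetry; apply cscal_c0.
Qed.


Definition lam (n : nat) (J : list nat) (x : nat -> R) : R := rmin n x / (alJ n J x + rmin n x).

Lemma rmin_nonneg n x : in_simplex n x -> 0 <= rmin n x.
Proof. intros [H _]. apply rmin_ge. intros; apply H; auto. Qed.

Lemma alJ_nonneg n J x : (forall j, In j J -> (j <= n)%nat) -> 0 <= alJ n J x.
Proof. intro HJn. apply lsum_nonneg. apply alJ_terms; auto. Qed.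

Lemma lam_bound n J x : (forall j, In j J -> (j <= n)%nat) -> in_simplex n x -> 0 <= lam n J x <= 1.
Proof.
  intros HJn Hx. unfold lam. assert (T1 := rmin_nonneg n x Hx). assert (T2 := alJ_nonneg n J x HJn).
  destruct (Req_dec (alJ n J x + rmin n x) 0) as [E|E].
  - unfold Rdiv. rewrite E, Rinv_0. lra.
  - split.
    + unfold Rdiv. apply Rmult_le_pos; auto. apply Rlt_le, Rinv_0_lt_compat; lra.
    + apply Rmult_le_reg_r with (alJ n J x + rmin n x); [lra|].
      unfold Rdiv. rewrite Rmult_assoc, Rinv_l by auto. lra.
Qed.

Lemma clampv_0 v l : clampv v l = 0 -> v l <= 0.
Proof. unfold clampv, Rmax, Rmin. repeat destruct Rle_dec; lra. Qed.
Lemma clampv_1 v l : clampv v l = 1 -> 1 <= v l.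
Proof. unfold clampv, Rmax, Rmin. repeat destruct Rle_dec; lra. Qed.
Lemma clampv_inner v l : 0 < clampv v l < 1 -> clampv v l = v l.
Proof. unfold clampv, Rmax, Rmin. repeat destruct Rle_dec; lra. Qed.

Lemma lsum_zero_fn J : lsum J (fun _ => 0) = 0.
Proof. induction J; simpl; auto. rewrite IHJ; ring. Qed.

Lemma phi_surj {A : CStarAlg} (I : nat -> A -> Prop) n J k e j0 (h : STy A k) :
  (forall j, (j <= n)%nat -> is_Cideal A (I j)) -> Eprops n J k e ->
  (forall j, In j J -> (j <= n)%nat) -> In j0 J ->
  inSusp A (fun a => forall j, In j J -> I j a) k h ->
  exists f, inB_L A I n J f /\ phiF n k e f = h.
Proof.
  intros HI HE HJn Hj0 Hh.
  set (D := fun a => forall j, In j J -> I j a) in *.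
  assert (HD0 : D c0). { intros j Hj. destruct (HI j (HJn j Hj)) as [T _]; auto. }
  set (Hv := fun w => Eval k h (tn_of k w)).
  assert (HvD : forall w, D (Hv w)) by (intro w; apply (Eval_D D); auto).
  assert (Hvout : forall w l, (l < k)%nat -> (w l <= 0 \/ 1 <= w l) -> Hv w = c0).
  { intros w l Hl Hw. apply (Eval_out D k h Hh). exists l. rewrite tget_tn_of; auto. }
  assert (HvAC : forall w0, AC k (fun _ => True) Hv w0).
  { intros w0 eps Heps. destruct (Eval_cont D k h HD0 Hh (tn_of k w0) eps Heps) as [d [Hd K]].
    exists d; split; auto. intros w _ Hw. apply K. apply close_tn_of; auto. }
  assert (HvPsi : forall x0, AC (S n) (in_simplex n) (fun x => Hv (Psi n k e x)) x0).
  { intro x0. apply (AC_comp _ _ k Hv (Psi n k e)); auto. intros l Hl. apply (VC_Psi n J); auto. }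
  assert (Hkey : forall x, in_simplex n x -> alJ n J x = 0 -> rmin n x = 0 -> Hv (Psi n k e x) = c0).
  { intros x Hx Hal Hmn. assert (HFJ := alJ_zero_FJ n J x HJn Hx Hal).
    assert (HW0 := FJ_W n J k e x HE HJn HFJ).
    assert (HW : rsum k (fun l => x (e l) - rmin n x) = 1) by (rewrite HW0, Hmn; ring). clear HW0.
    set (y := fun l => x (e l) - rmin n x) in *.
    assert (Hy0 : forall l, (l < k)%nat -> 0 <= y l) by (intros; apply (y_nonneg n J k); auto).
    assert (HY0 := rmax_ge0 k y).
    destruct (Req_dec (rmax k y) 0) as [EY|EY].
    - exfalso. assert (rsum k y = 0); [|lra].
      rewrite (rsum_ext _ _ (fun _ => 0)); [apply rsum_zero_fn|].
      intros l Hl. assert (y l <= rmax k y) by (apply rmax_ge; auto). specialize (Hy0 l Hl). lra.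
    - destruct (rmax_ex k y ltac:(lra)) as [l [Hl El]].
      apply (Hvout _ l Hl). right. unfold Psi. fold y. change (x (e l) - rmin n x) with (y l). rewrite HW, <- El. right. field. auto. }
  set (f := fun x => if excluded_middle_informative (in_simplex n x)
                     then cscal (mkC (lam n J x) 0) (Hv (Psi n k e x)) else c0).
  assert (Hf5 : forall j' x, (j' <= n)%nat -> ~ In j' J -> in_Delta_j n j' x -> f x = c0).
  { intros j' x Hj' HnJ Hx. unfold f. destruct (excluded_middle_informative (in_simplex n x)); [|auto].
    destruct HE as [E1 [E2 E3]]. destruct (E3 j' Hj' HnJ) as [l [Hl El]].
    rewrite (Hvout _ l Hl); [apply cscal_c0|]. left. unfold Psi. rewrite El, (Delta_rmin n j' x Hj' Hx), Rminus_diag.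
    unfold Rdiv; lra. }
  assert (Hf : inB_L A I n J f).
  { split; [split; [|split; [|split]]|].
    - intros x Hx. unfold f. destruct (excluded_middle_informative (in_simplex n x)); [contradiction|auto].
    - apply (AC_cos n _ (fun x => cscal (mkC (lam n J x) 0) (Hv (Psi n k e x)))).
      2:{ intros x Hx. unfold f. destruct (excluded_middle_informative (in_simplex n x)); [auto|contradiction]. }
      intros x0 Hx0. destruct (Req_dec (alJ n J x0 + rmin n x0) 0) as [E|E].
      + assert (T1 := rmin_nonneg n x0 Hx0). assert (T2 := alJ_nonneg n J x0 HJn).
        assert (Hz : Hv (Psi n k e x0) = c0) by (apply Hkey; auto; lra).
        intros eps Heps. destruct (HvPsi x0 eps Heps) as [d [Hd K]]. exists d; split; auto.
        intros x Px Hx. specialize (K x Px Hx). rewrite Hz in *. rewrite cscal_c0, cdist_c0, cnorm_scal_real.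
        rewrite cdist_c0 in K. destruct (lam_bound n J x HJn Px).
        rewrite Rabs_right by lra. assert (T := cnorm_nonneg A (Hv (Psi n k e x))). nra.
      + apply AC_scal; auto. unfold lam, alJ. apply VC_div; auto.
        * apply (VC_rmin _ _ n (fun i x => x i)). intros; apply VC_proj; lia.
        * apply VC_plus; [|apply (VC_rmin _ _ n (fun i x => x i)); intros; apply VC_proj; lia].
          apply (VC_lsum _ _ J (fun j x => x j - rmin n x)). intros j' Hj'.
          apply VC_minus; [apply VC_proj; specialize (HJn j' Hj'); lia|].
          apply (VC_rmin _ _ n (fun i x => x i)). intros; apply VC_proj; lia.
    - intros x [Hx [i [Hi Exi]]]. unfold f. destruct (excluded_middle_informative (in_simplex n x)) as [_|]; [|auto].
      assert (Hmn : rmin n x = 0).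
      { apply Rle_antisym; [rewrite <- Exi; apply rmin_le; auto|apply rmin_nonneg; auto]. }
      destruct (Req_dec (alJ n J x) 0) as [E|E].
      + rewrite Hkey by auto. apply cscal_c0.
      + unfold lam. rewrite Hmn. unfold Rdiv. rewrite Rmult_0_l. apply cscal_C0.
    - intros j x Hj Hx. destruct (in_dec Nat.eq_dec j J) as [HjJ|HjJ].
      + unfold f. destruct (excluded_middle_informative (in_simplex n x)).
        * destruct (HI j Hj) as [_ [_ [Hs _]]]. apply Hs. apply HvD; auto.
        * destruct (HI j Hj) as [T _]; auto.
      + rewrite (Hf5 j x) by auto. destruct (HI j Hj) as [T _]; auto.
    - auto. }
  exists f. split; auto.
  unfold phiF. transitivity (Build k (Eval k h)); [|apply Build_Eval]. f_equal.
  apply functional_extensionality; intro z.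
  set (c := clampv (tget k z)).
  assert (Hc : cube k c) by apply clampv_cube.
  destruct (classic (exists l, (l < k)%nat /\ (c l = 0 \/ c l = 1))) as [[l [Hl Hcl]]|Hno].
  - rewrite (f_bad I n J f) by (auto; apply (X_bad n J k e c l j0); auto).
    symmetry. apply (Eval_out D k h Hh). exists l. split; auto.
    destruct Hcl; [left; apply clampv_0|right; apply clampv_1]; auto.
  - assert (Hin : forall l, (l < k)%nat -> 0 < c l < 1).
    { intros l Hl. destruct (Hc l Hl). split.
      - destruct H; auto. exfalso; apply Hno; exists l; split; auto.
      - destruct H0; auto. exfalso; apply Hno; exists l; split; auto. }
    assert (Hs := X_simplex n J k e c HE Hc).
    unfold f. destruct (excluded_middle_informative (in_simplex n (Xm n k e c))) as [_|]; [|contradiction].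
    assert (HPz : Hv (Psi n k e (Xm n k e c)) = Eval k h z).
    { unfold Hv. f_equal. apply tget_ext. intros l Hl. rewrite (Psi_X n J k e c j0) by auto.
      apply clampv_inner. apply Hin; auto. }
    rewrite HPz.
    assert (HM : rmax k c < 1) by (apply rmax_lt; [lra|]; intros; apply Hin; auto).
    assert (Hr := X_rmin n J k e c j0 HE Hc Hj0 (HJn j0 Hj0)).
    assert (Hal : alJ n J (Xm n k e c) = 0).
    { unfold alJ. rewrite (lsum_ext _ _ (fun _ => 0)); [apply lsum_zero_fn|].
      intros j Hj. rewrite Hr. unfold Xm. rewrite (Xraw_J n J) by auto. ring. }
    assert (Hn := INR_Sn_pos n).
    assert (Hpos : 0 < rmin n (Xm n k e c)).
    { rewrite Hr. unfold Rdiv. apply Rmult_lt_0_compat; [lra|]. apply Rinv_0_lt_compat; auto. }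
    unfold lam. rewrite Hal, Rplus_0_l. unfold Rdiv. rewrite Rinv_r by lra. apply cscal_1.
Qed.


Theorem lemma4p4p10 (A : CStarAlg) (n : nat) (I : nat -> A -> Prop)
  (HI : forall j, (j <= n)%nat -> is_Cideal A (I j))
  (Hsum : is_sum_of_ideals A I n)
  (p : nat) (Hp : (p <= n)%nat)
  (J : list nat) (HJnd : NoDup J) (HJn : forall j, In j J -> (j <= n)%nat)
  (HJlen : length J = (p + 1)%nat) :
  quotient_iso_susp A (inB_L A I n J) (inQ A I n (Z.of_nat p - 1)%Z)
    (fun a => forall j, In j J -> I j a) (n - p).
Proof.
  assert (HE : Eprops n J (n - p) (eK n J)).
  { rewrite <- (Kl_length n J p) by auto. apply eK_props. }
  assert (Hj0 : exists j0, In j0 J) by (destruct J as [|j0 J']; [simpl in HJlen; lia|exists j0; left; auto]).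
  destruct Hj0 as [j0 Hj0].
  exists (phiF n (n - p) (eK n J)).
  split; [|split; [|split; [|split; [|split; [|split]]]]].
  - intros f g _ _. unfold phiF, SF_add. apply Build_add.
  - intros a f _. unfold phiF, SF_scal. apply Build_scal.
  - intros f g _ _. unfold phiF, SF_mul. apply Build_mul.
  - intros f _. unfold phiF, SF_star. apply Build_star.
  - intros f Hf. apply (phi_inSusp I n J _ _ j0); auto.
  - intros h Hh. apply (phi_surj I n J _ _ j0); auto.
  - intros f Hf. split.
    + intro H. apply (phi_kernel_fwd I n J (n - p) (eK n J)); auto.
    + intro H. apply (phi_kernel_bwd I n J (n - p) (eK n J) p); auto.
Qed.
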